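(* With the notation below, $\hat G=\hat N\alpha\hat B\sqcup\hat B$. Moreover, for $n_1,n_2\in\hat N$ one has $n_1\alpha\hat B\cap n_2\alpha\hat B\neq\varnothing$ if and only if $n_1\hat H=n_2\hat H$.
   Context: Let $F$ be a non-archimedean local field with ring of integers $\mathfrak{o}$, uniformizer $\varpi$, and finite residue field of cardinality $q$. $X=X_{PGL_2(F)}$ is the Bruhat–Tits tree of $PGL_2(F)$: vertices are homothety classes of $\mathfrak{o}$-lattices in $F^2$, with $[L],[L']$ adjacent iff there are representatives with $\varpi L\subsetneq L'\subsetneq L$; it is $(q+1)$-regular. $d$ is the path-length distance; $\mathrm{Aut}(X)$ is the group of distance-preserving bijections of the vertex set with the topology of pointwise convergence, and $PGL_2(F)\hookrightarrow\mathrm{Aut}(X)$ via the linear action on lattices. For an edge $\eta=\{y_1,y_2\}$ and $e\ge1$, $B(\eta,e)=\{y:\min(d(y,y_1),d(y,y_2))\le e\}$, and $\hat G=\hat G^{(e)}=\{g\in\mathrm{Aut}(X):\forall\eta\ \exists g'\in PGL_2(F),\ g|_{B(\eta,e)}=g'|_{B(\eta,e)}\}$ for a fixed $e\ge1$. Ends are equivalence classes of infinite paths (agreeing after an index shift from some point on). Fix a doubly infinite path $(x_n)_{n\in\mathbb{Z}}$; let $\omega$ be the end of $(x_n)_{n\ge0}$ and $\omega'$ the end of $(x_{-n})_{n\ge0}$. Set $\hat B=\{g\in\hat G: g(\omega)=\omega\}$, $\hat N=\{b\in\hat B: b(x_i)=x_i\text{ for some }i\in\mathbb{Z}\}$, $\hat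 H=\{n\in\hat N: n(x_k)=x_k\ \forall k\in\mathbb{Z}\}$. Fix $\alpha\in\hat G$ with $\alpha(x_n)=x_{-n}$ for all $n\in\mathbb{Z}$ (such $\alpha$ exists). *)

(* Defs.v *)
From HB Require Import structures.
From mathcomp Require Import all_boot all_order all_algebra.
Set Implicit Arguments. Unset Strict Implicit. Unset Printing Implicit Defensive.
Import Order.TTheory GRing.Theory Num.Theory.
Local Open Scope ring_scope.

Section LocalField.
Variables (F : fieldType) (v : F -> int).

(* "x has valuation >= k", with the convention v(0) = +infinity *)
Definition ge_val (x : F) (k : int) : Prop := x = 0 \/ k <= v x.

Definition in_o (x : F) : Prop := ge_val x 0.

Definition is_discrete_valuation : Prop :=
  [/\ (forall x y, x != 0 -> y != 0 -> v (x * y) = v x + v y),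
      (forall x y, x != 0 -> y != 0 -> x + y != 0 ->
          Num.min (v x) (v y) <= v (x + y)) &
      (forall k : int, exists2 x, x != 0 & v x = k)].

Definition is_complete : Prop :=
  forall u : nat -> F,
    (forall k : int, exists N : nat, forall m n, (N <= m)%N -> (N <= n)%N ->
        ge_val (u m - u n) k) ->
    exists l : F, forall k : int, exists N : nat, forall n, (N <= n)%N ->
        ge_val (u n - l) k.

(* the residue field o / varpi o is finite *)
Definition finite_residue_field : Prop :=
  exists s : seq F, (forall b, b \in s -> in_o b) /\
    forall a, in_o a -> exists2 b, b \in s & ge_val (a - b) 1.

Definition is_nonarch_local_field : Prop :=
  [/\ is_discrete_valuation, is_complete & finite_residue_field].

Definition vset := 'rV[F]_2 -> Prop.

Definition lattice_of (B : 'M[F]_2) : vset :=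
  fun x => exists c : 'rV[F]_2, (forall i, in_o (c 0 i)) /\ x = c *m B.

Definition is_lattice (L : vset) : Prop :=
  exists2 B : 'M[F]_2, B \in unitmx & L = lattice_of B.

Definition scale_set (c : F) (L : vset) : vset :=
  fun x => exists2 y, L y & x = c *: y.

(* homothety class of lattices = vertex of the Bruhat-Tits tree *)
Definition is_vertex (V : vset -> Prop) : Prop :=
  exists2 L0, is_lattice L0 &
    forall L, V L <-> exists2 c : F, c != 0 & L = scale_set c L0.

Definition Vertex := {V : vset -> Prop | is_vertex V}.

Definition subset_strict (A B : vset) : Prop :=
  (forall x, A x -> B x) /\ exists2 x, B x & ~ A x.

(* adjacency, for a fixed uniformizer varpi *)
Definition adj (varpi : F) (y z : Vertex) : Prop :=
  exists L, exists L', proj1_sig y L /\ proj1_sig z L' /\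
    subset_strict (scale_set varpi L) L' /\ subset_strict L' L.

Inductive walk (varpi : F) : Vertex -> Vertex -> nat -> Prop :=
  | walk0 y : walk varpi y y 0
  | walkS y z w n : adj varpi y z -> walk varpi z w n -> walk varpi y w n.+1.

Definition dist_le (varpi : F) (y z : Vertex) (n : nat) : Prop :=
  exists2 m, (m <= n)%N & walk varpi y z m.

Definition isAut (varpi : F) (g : Vertex -> Vertex) : Prop :=
  bijective g /\
  forall y z n, dist_le varpi (g y) (g z) n <-> dist_le varpi y z n.

Definition img (M : 'M[F]_2) (L : vset) : vset :=
  fun x => exists2 y, L y & x = y *m M.

(* the element of PGL_2(F) represented by M sends vertex y to vertex z *)
Definition acts_as (M : 'M[F]_2) (y z : Vertex) : Prop :=
  forall L', proj1_sig z L' <-> exists2 L, proj1_sig y L & L' = img M L.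

Definition in_ball (varpi : F) (y1 y2 : Vertex) (e : nat) (y : Vertex) : Prop :=
  dist_le varpi y1 y e \/ dist_le varpi y2 y e.

Definition inGhat (varpi : F) (e : nat) (g : Vertex -> Vertex) : Prop :=
  isAut varpi g /\
  forall y1 y2, adj varpi y1 y2 ->
    exists2 M : 'M[F]_2, M \in unitmx &
      forall y, in_ball varpi y1 y2 e y -> acts_as M y (g y).

Definition is_biinf_path (varpi : F) (x : int -> Vertex) : Prop :=
  (forall n : int, adj varpi (x n) (x (n + 1))) /\
  (forall n : int, x (n + 1) <> x (n - 1)).

(* g fixes the end omega of (x_n)_{n >= 0} *)
Definition fixes_end (x : int -> Vertex) (g : Vertex -> Vertex) : Prop :=
  exists k N : int, forall n : int, 0 <= n -> N <= n -> g (x n) = x (n + k).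

Definition inBhat varpi e x g : Prop := inGhat varpi e g /\ fixes_end x g.
Definition inNhat varpi e x g : Prop :=
  inBhat varpi e x g /\ exists i : int, g (x i) = x i.
Definition inHhat varpi e x g : Prop :=
  inNhat varpi e x g /\ forall k : int, g (x k) = x k.

End LocalField.

(* Main.v *)
Require Import Defs.
From HB Require Import structures.
From mathcomp Require Import all_boot all_order all_algebra.
From mathcomp Require Import ring lra zify.
From Stdlib Require Import Classical ClassicalEpsilon FunctionalExtensionality PropExtensionality ProofIrrelevance.
Import Order.TTheory GRing.Theory Num.Theory.
Set Implicit Arguments. Unset Strict Implicit. Unset Printing Implicit Defensive.
Local Open Scope ring_scope.

Ltac fieldnz := field; repeat (apply/andP; split); try done.


Section Mat.
Variable F : fieldType.

Definition mk2 (a b c d : F) : 'M[F]_2 :=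
  \matrix_(i < 2, j < 2) (if nat_of_ord i == 0%N then (if nat_of_ord j == 0%N then a else b)
                          else (if nat_of_ord j == 0%N then c else d)).

Lemma mk2E (M : 'M[F]_2) : M = mk2 (M 0 0) (M 0 1) (M 1 0) (M 1 1).
Proof.
apply/matrixP => i j; rewrite mxE.
case: i => [[|[|i]] Hi]; case: j => [[|[|j]] Hj] //=;
  by congr (M _ _); apply: val_inj.
Qed.

Lemma mk2_00 a b c d : mk2 a b c d 0 0 = a. Proof. by rewrite mxE. Qed.
Lemma mk2_01 a b c d : mk2 a b c d 0 1 = b. Proof. by rewrite mxE. Qed.
Lemma mk2_10 a b c d : mk2 a b c d 1 0 = c. Proof. by rewrite mxE. Qed.
Lemma mk2_11 a b c d : mk2 a b c d 1 1 = d. Proof. by rewrite mxE. Qed.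

Lemma mk2_eq a b c d a' b' c' d' :
  mk2 a b c d = mk2 a' b' c' d' -> [/\ a = a', b = b', c = c' & d = d'].
Proof.
move=> h; split.
- by have := congr1 (fun M : 'M_2 => M 0 0) h; rewrite !mk2_00.
- by have := congr1 (fun M : 'M_2 => M 0 1) h; rewrite !mk2_01.
- by have := congr1 (fun M : 'M_2 => M 1 0) h; rewrite !mk2_10.
- by have := congr1 (fun M : 'M_2 => M 1 1) h; rewrite !mk2_11.
Qed.

Lemma mk2_mul a b c d a' b' c' d' :
  mk2 a b c d *m mk2 a' b' c' d' =
  mk2 (a*a'+b*c') (a*b'+b*d') (c*a'+d*c') (c*b'+d*d').
Proof.
apply/matrixP => i j; rewrite !mxE !big_ord_recl big_ord0 !mxE /=.
case: i => [[|[|i]] Hi]; case: j => [[|[|j]] Hj] //=; by rewrite addr0.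
Qed.

Lemma mk2_det a b c d : \det (mk2 a b c d) = a * d - b * c.
Proof.
rewrite (expand_det_row _ 0) !big_ord_recl big_ord0 /cofactor !mxE /=.
rewrite !det_mx11 !mxE /=.
rewrite /bump /=. rewrite !expr0 !expr1 !mul1r addr0. ring.
Qed.

Lemma mk2_scale k a b c d : k *: mk2 a b c d = mk2 (k*a) (k*b) (k*c) (k*d).
Proof.
apply/matrixP => i j; rewrite !mxE.
by case: i => [[|[|i]] Hi]; case: j => [[|[|j]] Hj].
Qed.

Lemma mk2_one : (1%:M : 'M[F]_2) = mk2 1 0 0 1.
Proof.
apply/matrixP => i j; rewrite !mxE.
by case: i => [[|[|i]] Hi]; case: j => [[|[|j]] Hj].
Qed.

Lemma mk2_add a b c d a' b' c' d' :
  mk2 a b c d + mk2 a' b' c' d' = mk2 (a+a') (b+b') (c+c') (d+d').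
Proof.
apply/matrixP => i j; rewrite !mxE.
by case: i => [[|[|i]] Hi]; case: j => [[|[|j]] Hj].
Qed.

Lemma mk2_opp a b c d : - mk2 a b c d = mk2 (-a) (-b) (-c) (-d).
Proof.
apply/matrixP => i j; rewrite !mxE.
by case: i => [[|[|i]] Hi]; case: j => [[|[|j]] Hj].
Qed.

Lemma mk2_unit a b c d : (mk2 a b c d \in unitmx) = (a * d - b * c != 0).
Proof. by rewrite unitmxE mk2_det unitfE. Qed.

Lemma mk2_inv a b c d : a * d - b * c != 0 ->
  invmx (mk2 a b c d) =
  mk2 (d / (a*d-b*c)) (- b / (a*d-b*c)) (- c / (a*d-b*c)) (a / (a*d-b*c)).
Proof.
move=> h.
have hu : mk2 a b c d \in unitmx by rewrite mk2_unit.
have hm : mk2 a b c d *m mk2 (d / (a*d-b*c)) (- b / (a*d-b*c)) (- c / (a*d-b*c)) (a / (a*d-b*c)) = 1%:M.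
  rewrite mk2_mul mk2_one; congr mk2; field; exact h.
by rewrite -[invmx _]mulmx1 -hm mulmxA mulVmx // mul1mx.
Qed.

Definition rv2 (x y : F) : 'rV[F]_2 := \row_(j < 2) (if nat_of_ord j == 0%N then x else y).

Lemma rv2E (r : 'rV[F]_2) : r = rv2 (r 0 0) (r 0 1).
Proof.
apply/matrixP => i j; rewrite mxE.
rewrite (ord1 i).
case: j => [[|[|j]] Hj] //=; by congr (r _ _); apply: val_inj.
Qed.

Lemma rv2_mul x y a b c d : rv2 x y *m mk2 a b c d = rv2 (x*a + y*c) (x*b + y*d).
Proof.
apply/matrixP => i j; rewrite !mxE !big_ord_recl big_ord0 !mxE /=.
case: j => [[|[|j]] Hj] //=; by rewrite addr0.
Qed.

Lemma rv2_0 x y : rv2 x y 0 0 = x. Proof. by rewrite mxE. Qed.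
Lemma rv2_1 x y : rv2 x y 0 1 = y. Proof. by rewrite mxE. Qed.

Lemma rv2_scale k x y : k *: rv2 x y = rv2 (k*x) (k*y).
Proof.
apply/matrixP => i j; rewrite !mxE.
by case: j => [[|[|j]] Hj].
Qed.

Lemma rv2_eq x y x' y' : rv2 x y = rv2 x' y' -> x = x' /\ y = y'.
Proof.
move=> h; split.
- by have := congr1 (fun r : 'rV_2 => r 0 0) h; rewrite !rv2_0.
- by have := congr1 (fun r : 'rV_2 => r 0 1) h; rewrite !rv2_1.
Qed.

End Mat.


Section Val.
Variables (F : fieldType) (v : F -> int).
Hypothesis hv : is_discrete_valuation v.

Lemma vM x y : x != 0 -> y != 0 -> v (x * y) = v x + v y.
Proof. by case: hv => h _ _; apply: h. Qed.

Lemma vD x y : x != 0 -> y != 0 -> x + y != 0 -> Num.min (v x) (v y) <= v (x + y).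
Proof. by case: hv => _ h _; apply: h. Qed.

Lemma v1 : v 1 = 0.
Proof. have := vM (oner_neq0 F) (oner_neq0 F); rewrite mulr1 => h; set z := v 1 in h *; lia. Qed.

Lemma vV x : x != 0 -> v (x^-1) = - v x.
Proof.
move=> h; have := vM h (invr_neq0 h); rewrite mulfV // v1; lia.
Qed.

Lemma vN1 : v (-1) = 0.
Proof.
have h : (-1 : F) != 0 by rewrite oppr_eq0 oner_neq0.
have := vM h h; rewrite mulrNN mulr1 v1 => h'; set z := v (-1) in h' *; lia.
Qed.

Lemma vN x : v (- x) = v x.
Proof.
case: (eqVneq x 0) => [->|h]; first by rewrite oppr0.
have h1 : (-1 : F) != 0 by rewrite oppr_eq0 oner_neq0.
by rewrite -mulN1r vM // vN1 add0r.
Qed.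

Lemma vdiv x y : x != 0 -> y != 0 -> v (x / y) = v x - v y.
Proof. by move=> hx hy; rewrite vM ?invr_neq0 // vV. Qed.

Lemma gv0 k : ge_val v 0 k. Proof. by left. Qed.

Lemma gvE x k : x != 0 -> ge_val v x k <-> k <= v x.
Proof. by move=> h; split => [[/eqP e|//]|]; [rewrite e in h | right]. Qed.

Lemma gv_v x : ge_val v x (v x). Proof. by right. Qed.

Lemma gv_le x a b : ge_val v x a -> b <= a -> ge_val v x b.
Proof. by move=> [->|h] hb; [left|right; lia]. Qed.

Lemma gvN x k : ge_val v (- x) k <-> ge_val v x k.
Proof.
split => -[h|h].
- by left; apply/eqP; rewrite -oppr_eq0 h.
- by right; rewrite -vN.
- by left; rewrite h oppr0.
- by right; rewrite vN.
Qed.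

Lemma gvD x y k : ge_val v x k -> ge_val v y k -> ge_val v (x + y) k.
Proof.
move=> [->|hx]; first by rewrite add0r.
move=> [->|hy]; first by rewrite addr0; right.
case: (eqVneq x 0) => [->|nx]; first by rewrite add0r; right.
case: (eqVneq y 0) => [->|ny]; first by rewrite addr0; right.
case: (eqVneq (x + y) 0) => [->|nxy]; first by left.
right; have := vD nx ny nxy.
have : k <= Num.min (v x) (v y) by rewrite le_min hx hy.
exact: le_trans.
Qed.

Lemma gvB x y k : ge_val v x k -> ge_val v y k -> ge_val v (x - y) k.
Proof. by move=> hx hy; apply: gvD => //; apply/gvN. Qed.

Lemma gvM x y a b : ge_val v x a -> ge_val v y b -> ge_val v (x * y) (a + b).
Proof.
move=> [->|hx]; first by rewrite mul0r; left.
move=> [->|hy]; first by rewrite mulr0; left.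
case: (eqVneq x 0) => [->|nx]; first by rewrite mul0r; left.
case: (eqVneq y 0) => [->|ny]; first by rewrite mulr0; left.
right; rewrite vM //; lia.
Qed.

Lemma gv1 : ge_val v 1 0. Proof. by right; rewrite v1. Qed.

Lemma v1e e : ge_val v e 1 -> 1 + e != 0 /\ v (1 + e) = 0.
Proof.
move=> he.
have h0 : ge_val v (1 + e) 0 by apply: gvD; [exact: gv1| exact: gv_le he _].
have ne : 1 + e != 0.
  apply/eqP => h. have ee : e = -1 by rewrite -(addKr 1 e) h addr0. move: he; rewrite ee => -[/eqP|]; rewrite ?oppr_eq0 ?oner_eq0 // vN1 //.
split => //.
case: h0 => [/eqP|h0]; first by rewrite (negbTE ne).
have : ~ (1 <= v (1 + e)).
  move=> h1.
  have : ge_val v ((1 + e) - e) 1 by apply: gvB; [right|].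
  rewrite addrK => -[/eqP|]; rewrite ?oner_eq0 // v1 //.
lia.
Qed.

Section Pow.
Variable (w : F).
Hypothesis (hw0 : w != 0) (hw : v w = 1).

Lemma vXn (n : nat) : v (w ^+ n) = n%:Z.
Proof.
elim: n => [|n ih]; first by rewrite expr0 v1.
rewrite exprS vM ?expf_neq0 // hw ih; lia.
Qed.

Lemma vX (j : int) : v (w ^ j) = j.
Proof.
case: j => n; first by rewrite -exprnP vXn.
rewrite NegzE -invr_expz vV ?expfz_neq0 // -exprnP vXn; lia.
Qed.

Lemma wX_neq0 (j : int) : w ^ j != 0. Proof. exact: expfz_neq0. Qed.

Lemma wXD (i j : int) : w ^ (i + j) = w ^ i * w ^ j.
Proof. exact: expfzDr. Qed.

Lemma wXN (j : int) : w ^ (- j) = (w ^ j)^-1.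
Proof. by rewrite invr_expz. Qed.

Lemma gv_wX (j : int) : ge_val v (w ^ j) j.
Proof. by right; rewrite vX. Qed.

End Pow.

End Val.


Section Lat.
Variables (F : fieldType) (v : F -> int).
Hypothesis hv : is_discrete_valuation v.

Definition allge (M : 'M[F]_2) (k : int) := forall i j, ge_val v (M i j) k.
Notation inM M := (allge M 0).

Lemma allge_mk2 a b c d k :
  allge (mk2 a b c d) k <-> [/\ ge_val v a k, ge_val v b k, ge_val v c k & ge_val v d k].
Proof.
split.
- by move=> h; split; [have := h 0 0|have := h 0 1|have := h 1 0|have := h 1 1];
    rewrite ?mk2_00 ?mk2_01 ?mk2_10 ?mk2_11.
- case=> ha hb hc hd i j; rewrite mxE.
  by case: i => [[|[|i]] Hi]; case: j => [[|[|j]] Hj].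
Qed.

Lemma allgeP (M : 'M[F]_2) k :
  allge M k <-> [/\ ge_val v (M 0 0) k, ge_val v (M 0 1) k, ge_val v (M 1 0) k & ge_val v (M 1 1) k].
Proof. rewrite {1}[M]mk2E; exact: allge_mk2. Qed.

Lemma allge_le M a b : allge M a -> b <= a -> allge M b.
Proof. by move=> h hb i j; apply: gv_le (h i j) hb. Qed.

Lemma allge_mul A B a b : allge A a -> allge B b -> allge (A *m B) (a + b).
Proof.
rewrite [A]mk2E [B]mk2E mk2_mul !allge_mk2 => -[h1 h2 h3 h4] [g1 g2 g3 g4].
by split; apply: (gvD hv); apply: (gvM hv).
Qed.

Lemma allge_scale c A a b : ge_val v c a -> allge A b -> allge (c *: A) (a + b).
Proof.
rewrite [A]mk2E mk2_scale !allge_mk2 => hc [h1 h2 h3 h4].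
by split; apply: (gvM hv).
Qed.

Lemma allge_add A B k : allge A k -> allge B k -> allge (A + B) k.
Proof. by move=> ha hb i j; rewrite mxE; apply: gvD. Qed.

Lemma allge_opp A k : allge A k -> allge (- A) k.
Proof. by move=> ha i j; rewrite mxE; apply/gvN. Qed.

Lemma allge_1 : allge 1%:M 0.
Proof. by rewrite mk2_one allge_mk2; split; first [exact: gv1 | exact: gv0]. Qed.

Lemma inM_mul A B : inM A -> inM B -> inM (A *m B).
Proof. by move=> ha hb; have := allge_mul ha hb; rewrite addr0. Qed.

Lemma det_ge A k : allge A k -> ge_val v (\det A) (k + k).
Proof.
rewrite [A]mk2E allge_mk2 mk2_det => -[h1 h2 h3 h4].
by apply: (gvB hv) => //; apply: (gvM hv).
Qed.

Lemma invmxM (A B : 'M[F]_2) : A \in unitmx -> B \in unitmx ->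
  invmx (A *m B) = invmx B *m invmx A.
Proof.
move=> ua ub; have u : A *m B \in unitmx by rewrite unitmx_mul ua ub.
have e : (A *m B) *m (invmx B *m invmx A) = 1%:M.
  by rewrite -mulmxA (mulmxA B) mulmxV // mul1mx mulmxV.
by rewrite -[invmx (A *m B)]mulmx1 -e mulmxA mulVmx // mul1mx.
Qed.

Definition GL2o (U : 'M[F]_2) := [/\ U \in unitmx, inM U & inM (invmx U)].

Lemma GL2o_1 : GL2o 1%:M.
Proof. by split; rewrite ?unitmx1 ?invmx1 //; exact: allge_1. Qed.

Lemma GL2o_mul U V : GL2o U -> GL2o V -> GL2o (U *m V).
Proof.
move=> [u1 u2 u3] [w1 w2 w3]; split.
- by rewrite unitmx_mul u1 w1.
- exact: inM_mul.
- by rewrite invmxM //; apply: inM_mul.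
Qed.

Lemma GL2o_inv U : GL2o U -> GL2o (invmx U).
Proof. by move=> [u1 u2 u3]; split; rewrite ?unitmx_inv ?invmxK. Qed.

Lemma GL2o_det U : GL2o U -> \det U != 0 /\ v (\det U) = 0.
Proof.
move=> [u1 u2 u3].
have nz : \det U != 0 by rewrite -unitfE -unitmxE.
have nz' : \det (invmx U) != 0 by rewrite -unitfE -unitmxE unitmx_inv.
have e : \det U * \det (invmx U) = 1 by rewrite -det_mulmx mulmxV // det1.
have g1 := det_ge u2; have g2 := det_ge u3.
move: g1 g2; rewrite (gvE v _ nz) (gvE v _ nz') => g1 g2.
have := vM hv nz nz'; rewrite e v1 // => h.
split => //. move: g1 g2 h; set a := v (\det U); set b := v _. lia.
Qed.

Lemma GL2o_of_det U : inM U -> \det U != 0 -> v (\det U) = 0 -> GL2o U.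
Proof.
rewrite [U]mk2E mk2_det => hu nz h0.
have hu' := hu; move: hu'; rewrite allge_mk2 => -[h1 h2 h3 h4].
have gi : ge_val v ((U 0 0 * U 1 1 - U 0 1 * U 1 0)^-1) 0.
  by right; rewrite vV // h0.
split.
- by rewrite mk2_unit.
- exact: hu.
- rewrite mk2_inv // allge_mk2; split; rewrite -[(0:int)]addr0; apply: (gvM hv) => //; apply/gvN => //.
Qed.

Lemma vset_ext (L1 L2 : vset F) : (forall x, L1 x <-> L2 x) -> L1 = L2.
Proof.
move=> h; apply: functional_extensionality => x; apply: propositional_extensionality; exact: h.
Qed.

Lemma in_o_ge x : in_o v x <-> ge_val v x 0. Proof. by []. Qed.

Lemma rowge (c : 'rV[F]_2) (M : 'M[F]_2) :
  (forall i, in_o v (c 0 i)) -> inM M -> forall i, in_o v ((c *m M) 0 i).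
Proof.
move=> hc hM i.
have [h1 h2 h3 h4] := (allgeP M 0).1 hM.
have hc0 := hc 0; have hc1 := hc 1.
rewrite [c]rv2E [M]mk2E rv2_mul.
rewrite /in_o mxE; case: i => [[|[|i]] Hi] //=;
  rewrite -[(0:int)]addr0; apply: (gvD hv); rewrite -[(0:int)]addr0; apply: (gvM hv) => //.
Qed.

Lemma lat_subM (T B : 'M[F]_2) x : inM T -> lattice_of v (T *m B) x -> lattice_of v B x.
Proof.
move=> hT [c [hc ->]]; exists (c *m T); split; last by rewrite mulmxA.
exact: rowge.
Qed.

Lemma lat_sub_inM (B B' : 'M[F]_2) : B' \in unitmx ->
  (forall x, lattice_of v B x -> lattice_of v B' x) -> inM (B *m invmx B').
Proof.
move=> u h.
have key : forall r : 'rV[F]_2, (forall i, in_o v (r 0 i)) -> forall i, in_o v ((r *m (B *m invmx B')) 0 i).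
  move=> r hr; have [c [hc e]] : lattice_of v B' (r *m B) by apply: h; exists r.
  by rewrite mulmxA e mulmxK.
rewrite allgeP.
have k0 := key (rv2 1 0); have k1 := key (rv2 0 1).
have o1 : in_o v (1:F) by exact: gv1.
have o0 : in_o v (0:F) by exact: gv0.
have hr0 : forall i, in_o v (rv2 1 0 0 i) by move=> i; rewrite mxE; case: (nat_of_ord i == 0%N).
have hr1 : forall i, in_o v (rv2 0 1 0 i) by move=> i; rewrite mxE; case: (nat_of_ord i == 0%N).
move: (k0 hr0) (k1 hr1); rewrite [B *m invmx B']mk2E !rv2_mul => g0 g1.
have := g0 0; have := g0 1; have := g1 0; have := g1 1.
rewrite !mxE /= !mul1r !mul0r !addr0 !add0r => a b c d; split; assumption.
Qed.

Lemma lat_GL U B : GL2o U -> lattice_of v (U *m B) = lattice_of v B.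
Proof.
move=> [u1 u2 u3]; apply: vset_ext => x; split; first exact: lat_subM.
move=> h; apply: (@lat_subM (invmx U)) => //; by rewrite mulmxA mulVmx // mul1mx.
Qed.

Lemma lat_scale c B : scale_set c (lattice_of v B) = lattice_of v (c *: B).
Proof.
apply: vset_ext => x; split.
- by move=> [y [d [hd ->]] ->]; exists d; split => //; rewrite scalemxAr.
- by move=> [d [hd ->]]; exists (d *m B); [exists d|rewrite scalemxAr].
Qed.

Lemma img_lat M B : img M (lattice_of v B) = lattice_of v (B *m M).
Proof.
apply: vset_ext => x; split.
- by move=> [y [d [hd ->]] ->]; exists d; rewrite mulmxA.
- by move=> [d [hd ->]]; exists (d *m B); [exists d|rewrite mulmxA].
Qed.

Lemma lat_eq_GL B B' : B \in unitmx -> B' \in unitmx ->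
  lattice_of v B = lattice_of v B' -> GL2o (B *m invmx B').
Proof.
move=> u u' e; split.
- by rewrite unitmx_mul u unitmx_inv.
- by apply: lat_sub_inM => // x; rewrite e.
- rewrite invmxM ?unitmx_inv // invmxK; by apply: lat_sub_inM => // x; rewrite e.
Qed.

End Lat.
Notation inM v M := (allge v M 0).


Section Vert.
Variables (F : fieldType) (v : F -> int).
Hypothesis hv : is_discrete_valuation v.
Local Notation V := (Vertex v).

Definition rep (y : V) (B : 'M[F]_2) := B \in unitmx /\ proj1_sig y (lattice_of v B).

Lemma scale_scale a b (L : vset F) : scale_set a (scale_set b L) = scale_set (a * b) L.
Proof.
apply: vset_ext => x; split.
- by move=> [y [z hz ->] ->]; exists z => //; rewrite scalerA.
- by move=> [z hz ->]; exists (b *: z); [exists z|rewrite scalerA].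
Qed.

Lemma scale1 (L : vset F) : scale_set 1 L = L.
Proof.
apply: vset_ext => x; split; first by move=> [y hy ->]; rewrite scale1r.
by move=> h; exists x; rewrite ?scale1r.
Qed.

Lemma rep_class y B : rep y B -> forall L, proj1_sig y L <-> exists2 c : F, c != 0 & L = lattice_of v (c *: B).
Proof.
case: y => Y [L0 [B0 uB0 eL0] hY] /= [uB hB] L.
have [c1 nc1 e1] := (hY _).1 hB.
rewrite eL0 lat_scale in e1.
split.
- move=> /(hY _) [c nc ->]; exists (c / c1); first by rewrite mulf_neq0 ?invr_neq0.
  by rewrite -lat_scale e1 lat_scale eL0 lat_scale scalerA divfK.
- move=> [c nc ->]; apply/(hY _); exists (c * c1); first by rewrite mulf_neq0.
  by rewrite eL0 lat_scale -lat_scale e1 lat_scale scalerA.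
Qed.

Lemma rep_exists (y : V) : exists B, rep y B.
Proof.
case: y => Y [L0 [B0 uB0 eL0] hY]; exists B0; split => //=.
apply/(hY _); exists 1; first exact: oner_neq0.
by rewrite scale1.
Qed.

Lemma rep_rel y B B' : rep y B -> rep y B' ->
  exists c U, [/\ c != 0, GL2o v U & B' = c *: (U *m B)].
Proof.
move=> hB [uB' hB']; have [c nc e] := (rep_class hB _).1 hB'.
have ucB : c *: B \in unitmx.
  by rewrite unitmxZ ?unitfE // ; case: hB.
exists c, (B' *m invmx (c *: B)); split => //.
- by apply: lat_eq_GL.
- by rewrite scalemxAr mulmxKV.
Qed.

Lemma rep_GL y B c U : rep y B -> c != 0 -> GL2o v U -> rep y (c *: (U *m B)).
Proof.
move=> hB nc hU; have [uB _] := hB; have [uU _ _] := hU.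
split; first by rewrite unitmxZ ?unitfE // unitmx_mul uU uB.
apply/(rep_class hB); exists c => //.
by rewrite -lat_scale lat_GL // lat_scale.
Qed.

Lemma rep_scale y B c : rep y B -> c != 0 -> rep y (c *: B).
Proof.
move=> hB nc; have := rep_GL hB nc (@GL2o_1 _ _ hv); by rewrite mul1mx.
Qed.

Lemma vert_ext (y z : V) : (forall L, proj1_sig y L <-> proj1_sig z L) -> y = z.
Proof.
case: y => Y hY; case: z => Z hZ /= h.
have e : Y = Z.
  apply: functional_extensionality => L; apply: propositional_extensionality; exact: h.
subst Z; f_equal; apply: proof_irrelevance.
Qed.

Lemma vert_eq y z B : rep y B -> rep z B -> y = z.
Proof.
move=> hy hz; apply: vert_ext => L.
by rewrite (rep_class hy) (rep_class hz).
Qed.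

Lemma vert_eqGL y z B c U : rep y B -> rep z (c *: (U *m B)) -> c != 0 -> GL2o v U -> y = z.
Proof. by move=> hy hz nc hU; apply: (vert_eq _ hz); apply: rep_GL. Qed.

Definition cls (L0 : vset F) : vset F -> Prop :=
  fun L => exists2 c : F, c != 0 & L = scale_set c L0.

Definition ifu (B : 'M[F]_2) := if B \in unitmx then B else 1%:M.

Lemma ifu_unit B : ifu B \in unitmx.
Proof. by rewrite /ifu; case: ifP => // _; rewrite unitmx1. Qed.

Lemma is_vertex_cls B : is_vertex v (cls (lattice_of v (ifu B))).
Proof.
exists (lattice_of v (ifu B)); last by [].
by exists (ifu B); [exact: ifu_unit|].
Qed.

Definition mkV (B : 'M[F]_2) : V := exist _ _ (is_vertex_cls B).

Lemma rep_mkV B : B \in unitmx -> rep (mkV B) B.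
Proof.
move=> uB; split => //=; rewrite /ifu uB.
by exists 1; [exact: oner_neq0| rewrite scale1].
Qed.

Definition repOf (y : V) : 'M[F]_2 := proj1_sig (constructive_indefinite_description _ (rep_exists y)).
Lemma repOf_spec y : rep y (repOf y).
Proof. exact: proj2_sig (constructive_indefinite_description _ (rep_exists y)). Qed.

Lemma img_comp A B (L : vset F) : img B (img A L) = img (A *m B) L.
Proof.
apply: vset_ext => x; split.
- by move=> [y [z hz ->] ->]; exists z; rewrite ?mulmxA.
- by move=> [z hz ->]; exists (z *m A); [exists z|rewrite mulmxA].
Qed.

Lemma img1 (L : vset F) : img 1%:M L = L.
Proof.
apply: vset_ext => x; split; first by move=> [y hy ->]; rewrite mulmx1.
by move=> h; exists x; rewrite ?mulmx1.
Qed.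

Lemma img_scale M c (L : vset F) : img M (scale_set c L) = scale_set c (img M L).
Proof.
apply: vset_ext => x; split.
- by move=> [y [z hz ->] ->]; exists (z *m M); [exists z|rewrite scalemxAl].
- by move=> [y [z hz ->] ->]; exists (c *: z); [exists z|rewrite scalemxAl].
Qed.

Definition act (M : 'M[F]_2) (y : V) : V := mkV (repOf y *m M).

Lemma rep_act (M : 'M[F]_2) (y : V) : M \in unitmx -> rep (act M y) (repOf y *m M).
Proof.
move=> uM; apply: rep_mkV; rewrite unitmx_mul uM andbT; by case: (repOf_spec y).
Qed.

Lemma acts_as_rep (M : 'M[F]_2) (y z : V) B : acts_as M y z -> rep y B -> M \in unitmx -> rep z (B *m M).
Proof.
move=> h [uB hB] uM; split; first by rewrite unitmx_mul uB uM.
by apply/h; exists (lattice_of v B) => //; rewrite img_lat.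
Qed.

Lemma acts_as_of_rep (M : 'M[F]_2) (y z : V) B : rep y B -> rep z (B *m M) -> acts_as M y z.
Proof.
move=> hy hz L'; rewrite (rep_class hz); split.
- move=> [c nc ->]; exists (lattice_of v (c *: B)); first by apply/(rep_class hy); exists c.
  by rewrite img_lat scalemxAl.
- move=> [L /(rep_class hy) [c nc ->] ->]; exists c => //.
  by rewrite img_lat scalemxAl.
Qed.

Lemma acts_as_act (M : 'M[F]_2) (y : V) : M \in unitmx -> acts_as M y (act M y).
Proof. move=> uM; apply: acts_as_of_rep (repOf_spec y) (rep_act y uM). Qed.

Lemma acts_as_uniq (M : 'M[F]_2) (y z z' : V) : acts_as M y z -> acts_as M y z' -> z = z'.
Proof. by move=> h h'; apply: vert_ext => L; rewrite h h'. Qed.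

Lemma acts_as_comp (A B : 'M[F]_2) (y z w : V) : acts_as A y z -> acts_as B z w -> acts_as (A *m B) y w.
Proof.
move=> h1 h2 L''; rewrite h2; split.
- move=> [L' /h1 [L hL ->] ->]; exists L => //; by rewrite img_comp.
- move=> [L hL ->]; exists (img A L); first by apply/h1; exists L.
  by rewrite img_comp.
Qed.

Lemma acts_as_inv (M : 'M[F]_2) (y z : V) : M \in unitmx -> acts_as M y z -> acts_as (invmx M) z y.
Proof.
move=> uM h L; split.
- move=> hL; exists (img M L); first by apply/h; exists L.
  by rewrite img_comp mulmxV // img1.
- move=> [L' /h [L0 hL0 ->] ->]; by rewrite img_comp mulmxV // img1.
Qed.

Lemma acts_as_1 (y : V) : acts_as 1%:M y y.
Proof.
move=> L; split; first by move=> h; exists L; rewrite ?img1.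
by move=> [L0 h ->]; rewrite img1.
Qed.

End Vert.



Section Herm.
Variables (F : fieldType) (v : F -> int).
Hypothesis hv : is_discrete_valuation v.
Variable (w : F).
Hypotheses (hw0 : w != 0) (hw : v w = 1).

Lemma gl2o_mk2 a b c d : ge_val v a 0 -> ge_val v b 0 -> ge_val v c 0 -> ge_val v d 0 ->
  a * d - b * c != 0 -> v (a * d - b * c) = 0 -> GL2o v (mk2 a b c d).
Proof.
move=> ha hb hc hd nz h0; apply: GL2o_of_det => //; rewrite ?mk2_det //.
by rewrite allge_mk2.
Qed.

Lemma in_o_v x : x != 0 -> ge_val v x 0 -> 0 <= v x.
Proof. by move=> nx /(gvE v _ nx). Qed.

Lemma triA a c d : ge_val v a 0 -> ge_val v c 0 -> ge_val v d 0 ->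
  a * d != 0 -> v (a * d) = 1 ->
  exists U, GL2o v U /\
    ((exists al, ge_val v al 0 /\ mk2 a 0 c d = U *m mk2 w 0 al 1) \/
     mk2 a 0 c d = U *m mk2 1 0 0 w).
Proof.
move=> ha hc hd nad had.
have na : a != 0 by move: nad; rewrite mulf_eq0 negb_or => /andP[].
have nd : d != 0 by move: nad; rewrite mulf_eq0 negb_or => /andP[].
have va := in_o_v na ha; have vd := in_o_v nd hd.
rewrite vM // in had.
have [vd0|vd1] : v d = 0 \/ v d = 1 by lia.
- have na' : a / w != 0 by rewrite mulf_neq0 ?invr_neq0.
  exists (mk2 (a / w) 0 0 d); split.
  + apply: gl2o_mk2 => //; try exact: gv0.
    * by right; rewrite vdiv // hw; lia.
    * by rewrite ?mulr0 ?mul0r subr0 mulf_neq0.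
    * by rewrite ?mulr0 ?mul0r subr0 vM // vdiv // hw; lia.
  + left; exists (c / d); split.
    * case: (eqVneq c 0) => [->|nc]; first by rewrite mul0r; exact: gv0.
      by right; rewrite vdiv // vd0; move: (in_o_v nc hc); lia.
    * rewrite mk2_mul; congr mk2; fieldnz.
- exists (mk2 a 0 c (d / w)); split.
  + apply: gl2o_mk2 => //; try exact: gv0.
    * by right; rewrite vdiv // hw; lia.
    * by rewrite ?mulr0 ?mul0r subr0 mulf_neq0 ?mulf_neq0 ?invr_neq0.
    * by rewrite ?mulr0 ?mul0r subr0 vM ?mulf_neq0 ?invr_neq0 // vdiv // hw; lia.
  + right; rewrite mk2_mul; congr mk2; fieldnz.
Qed.

Lemma GL2o_J : GL2o v (mk2 0 1 1 0).
Proof.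
apply: gl2o_mk2; try exact: gv0; try exact: (gv1 hv).
- by rewrite mul0r sub0r mulr1 oppr_eq0 oner_eq0.
- by rewrite mul0r sub0r mulr1 (vN hv) (v1 hv).
Qed.

Lemma GL2o_up t : ge_val v t 0 -> GL2o v (mk2 1 t 0 1).
Proof.
move=> ht; apply: gl2o_mk2; try exact: gv0; try exact: (gv1 hv);
  by rewrite ?mulr0 ?mulr1 ?subr0 ?oner_eq0 ?(v1 hv).
Qed.

Lemma lowerH T : inM v T -> \det T != 0 -> v (\det T) = 1 ->
  exists U, GL2o v U /\
    ((exists al, ge_val v al 0 /\ T = U *m mk2 w 0 al 1) \/ T = U *m mk2 1 0 0 w).
Proof.
rewrite [T]mk2E mk2_det allge_mk2.
set a := T 0 0; set b := T 0 1; set c := T 1 0; set d := T 1 1.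
move=> [ha hb hc hd] nz vdt.
have red : forall a b c d, ge_val v a 0 -> ge_val v b 0 -> ge_val v c 0 -> ge_val v d 0 ->
   a * d - b * c != 0 -> v (a * d - b * c) = 1 -> d != 0 -> ge_val v b (v d) ->
   exists U, GL2o v U /\
    ((exists al, ge_val v al 0 /\ mk2 a b c d = U *m mk2 w 0 al 1) \/ mk2 a b c d = U *m mk2 1 0 0 w).
  move=> a' b' c' d' ha' hb' hc' hd' nz' v1' nd' hbd.
  have hq : ge_val v (b' / d') 0.
    case: (eqVneq b' 0) => [->|nb]; first by rewrite mul0r; exact: gv0.
    by right; rewrite vdiv //; move: hbd => /(gvE v _ nb); lia.
  have e : mk2 a' b' c' d' = mk2 1 (b' / d') 0 1 *m mk2 (a' - b' / d' * c') 0 c' d'.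
    rewrite mk2_mul; congr mk2; fieldnz.
  have ea : (a' - b' / d' * c') * d' = a' * d' - b' * c' by field.
  have [U [hU H]] : exists U, GL2o v U /\
    ((exists al, ge_val v al 0 /\ mk2 (a' - b' / d' * c') 0 c' d' = U *m mk2 w 0 al 1) \/
     mk2 (a' - b' / d' * c') 0 c' d' = U *m mk2 1 0 0 w).
    apply: triA => //; last by rewrite ea.
    - apply: (gvB hv) => //; rewrite -[(0:int)]addr0; exact: (gvM hv).
    - by rewrite ea.
  exists (mk2 1 (b' / d') 0 1 *m U); split; first by apply: (GL2o_mul hv) (GL2o_up hq) hU.
  case: H => [[al [hal e']]|e']; [left; exists al; split => //|right];
    by rewrite e e' mulmxA.
have swap : ge_val v d (v b) -> b != 0 ->
   exists U, GL2o v U /\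
    ((exists al, ge_val v al 0 /\ mk2 a b c d = U *m mk2 w 0 al 1) \/ mk2 a b c d = U *m mk2 1 0 0 w).
  move=> hdb nb.
  have e : mk2 a b c d = mk2 0 1 1 0 *m mk2 c d a b.
    by rewrite mk2_mul; congr mk2; ring.
  have ed : c * b - d * a = - (a * d - b * c) by ring.
  have n1 : c * b - d * a != 0 by rewrite ed oppr_eq0.
  have n2 : v (c * b - d * a) = 1 by rewrite ed (vN hv).
  have [U [hU H]] := red c d a b hc hd ha hb n1 n2 nb hdb.
  exists (mk2 0 1 1 0 *m U); split; first exact: (GL2o_mul hv) GL2o_J hU.
  case: H => [[al [hal e']]|e']; [left; exists al; split => //|right];
    by rewrite e e' mulmxA.
case: (eqVneq d 0) => [d0|nd].
- have nb : b != 0 by apply: contra nz => /eqP ->; rewrite d0 mulr0 mul0r subr0.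
  by apply: swap => //; rewrite d0; exact: gv0.
- case: (eqVneq b 0) => [b0|nb].
  + by apply: red => //; rewrite b0; exact: gv0.
  + have [hbd|hdb] : v d <= v b \/ v b < v d by lia.
    * by apply: red => //; right.
    * by apply: swap => //; right; lia.
Qed.

Lemma upperH T : inM v T -> \det T != 0 -> v (\det T) = 1 ->
  exists U, GL2o v U /\
    ((exists be, ge_val v be 0 /\ T = U *m mk2 1 be 0 w) \/ T = U *m mk2 w 0 0 1).
Proof.
rewrite [T]mk2E mk2_det allge_mk2.
set a := T 0 0; set b := T 0 1; set c := T 1 0; set d := T 1 1.
move=> [ha hb hc hd] nz vdt.
have e1 : d * a - c * b = a * d - b * c by ring.
have m1 : inM v (mk2 d c b a) by rewrite allge_mk2.
have m2 : \det (mk2 d c b a) != 0 by rewrite mk2_det e1.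
have m3 : v (\det (mk2 d c b a)) = 1 by rewrite mk2_det e1.
have [U [hU H]] := lowerH m1 m2 m3.
exists (mk2 0 1 1 0 *m U *m mk2 0 1 1 0); split.
  by apply: (GL2o_mul hv); [apply: (GL2o_mul hv) GL2o_J hU|exact: GL2o_J].
have eT : mk2 a b c d = mk2 0 1 1 0 *m mk2 d c b a *m mk2 0 1 1 0.
  by rewrite !mk2_mul; congr mk2; ring.
case: H => [[al [hal e']]|e']; [left; exists al; split => //|right];
  rewrite eT e' -!mulmxA; congr (_ *m (_ *m _)); rewrite !mk2_mul; congr mk2; ring.
Qed.

End Herm.


Section Adj.
Variables (F : fieldType) (v : F -> int).
Hypothesis hv : is_discrete_valuation v.
Variable (w : F).
Hypotheses (hw0 : w != 0) (hw : v w = 1).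
Local Notation V := (Vertex v).

Lemma class_scale (y : V) L c : proj1_sig y L -> c != 0 -> proj1_sig y (scale_set c L).
Proof.
move=> hL nc; have [B hB] := rep_exists y.
have [c1 nc1 ->] := (rep_class hB L).1 hL.
apply/(rep_class hB); exists (c * c1); first by rewrite mulf_neq0.
by rewrite lat_scale scalerA.
Qed.

Lemma strict_scale c (A B : vset F) : c != 0 -> subset_strict A B ->
  subset_strict (scale_set c A) (scale_set c B).
Proof.
move=> nc [h1 [x hx nx]]; split.
- by move=> y [z hz ->]; exists z => //; apply: h1.
- exists (c *: x); first by exists x.
  move=> [z hz e]; apply: nx.
  have : z = x by rewrite -[z](scalerK nc) -e scalerK.
  by move=> <-.
Qed.

Lemma adj_sym (y z : V) : adj w y z -> adj w z y.
Proof.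
move=> [L [L' [hL [hL' [s1 s2]]]]].
exists L', (scale_set w L); split => //; split; first exact: class_scale.
split => //; exact: strict_scale.
Qed.

Lemma strict_neq (A B : vset F) : subset_strict A B -> A <> B.
Proof. by move=> [_ [x hx nx]] e; apply: nx; rewrite e. Qed.

Lemma adj_T (y z : V) B : adj w y z -> rep y B ->
  exists T, [/\ inM v T, \det T != 0, v (\det T) = 1 & rep z (T *m B)].
Proof.
move=> [L [L' [hL [hL' [s1 s2]]]]] hB.
have [uB _] := hB.
have [c1 nc1 eL] := (rep_class hB L).1 hL.
have [Bz hBz] := rep_exists z.
have [c2 nc2 eL'] := (rep_class hBz L').1 hL'.
set X := c1 *: B in eL; set Y := c2 *: Bz in eL'.
have uX : X \in unitmx by rewrite unitmxZ ?unitfE.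
have uY : Y \in unitmx by rewrite unitmxZ ?unitfE //; case: hBz.
have uwX : w *: X \in unitmx by rewrite unitmxZ ?unitfE.
have hT : inM v (Y *m invmx X).
  by apply: (lat_sub_inM hv) => // x; rewrite -eL -eL'; case: s2 => h _; exact: h.
have hS : inM v (w *: X *m invmx Y).
  apply: (lat_sub_inM hv) => // x; rewrite -eL' -lat_scale -eL; case: s1 => h _; exact: h.
set T := Y *m invmx X in hT *; set S := w *: X *m invmx Y in hS *.
have eTS : T *m S = w *: 1%:M.
  by rewrite /T /S -scalemxAl -scalemxAr !mulmxA mulmxKV // mulmxV.
have uT : T \in unitmx by rewrite unitmx_mul uY unitmx_inv.
have uS : S \in unitmx by rewrite unitmx_mul uwX unitmx_inv.
have nT : \det T != 0 by rewrite -unitfE -unitmxE.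
have nS : \det S != 0 by rewrite -unitfE -unitmxE.
have edet : \det T * \det S = w ^+ 2.
  by rewrite -det_mulmx eTS detZ det1 mulr1.
have vsum : v (\det T) + v (\det S) = 2.
  by rewrite -(vM hv) // edet (vXn hv hw0 hw).
have gT := det_ge hv hT; have gS := det_ge hv hS.
move: gT gS; rewrite (gvE v _ nT) (gvE v _ nS) addr0 => gT gS.
have eTX : T *m X = Y by rewrite /T mulmxKV.
have eSY : S *m Y = w *: X by rewrite /S mulmxKV.
exists T; split => //.
- have [t0|t1] : v (\det T) = 0 \/ 1 <= v (\det T) by lia.
  + exfalso; apply: (strict_neq s2).
    have gl : GL2o v T by apply: (GL2o_of_det hv).
    by rewrite eL eL' -eTX (lat_GL hv).
  + have [s0|s1'] : v (\det S) = 0 \/ 1 <= v (\det S) by lia.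
    * exfalso; apply: (strict_neq s1).
      have gl : GL2o v S by apply: (GL2o_of_det hv).
      by rewrite eL lat_scale eL' -eSY (lat_GL hv).
    * lia.
- have e : T *m B = c1^-1 *: Y.
    by rewrite -eTX /X -scalemxAr scalerA mulVf // scale1r.
  rewrite e; apply: (rep_scale hv) => //; last by rewrite invr_neq0.
  by apply: (rep_scale hv).
Qed.

Lemma adj_noloop (y : V) : ~ adj w y y.
Proof.
move=> h; have [B hB] := rep_exists y.
have [T [hT nT vT hTB]] := adj_T h hB.
have [c [U [nc hU e]]] := rep_rel hv hB hTB.
have [uB _] := hB.
have eT : T = c *: U by rewrite -[T](mulmxK uB) e -scalemxAl mulmxK.
have [nU vU] := GL2o_det hv hU.
move: vT; rewrite eT detZ (vM hv) ?expf_neq0 // vU addr0 expr2 (vM hv) //.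
set z := v c; lia.
Qed.

Lemma adj_neq (y z : V) : adj w y z -> y <> z.
Proof. by move=> h e; rewrite e in h; exact: adj_noloop h. Qed.

Lemma strict_img M (A B : vset F) : M \in unitmx -> subset_strict A B ->
  subset_strict (img M A) (img M B).
Proof.
move=> uM [h1 [x hx nx]]; split.
- by move=> y [z hz ->]; exists z => //; apply: h1.
- exists (x *m M); first by exists x.
  move=> [z hz e]; apply: nx.
  have : z = x by rewrite -[z](mulmxK uM) -e mulmxK.
  by move=> <-.
Qed.

Lemma acts_as_adj M (y y' z z' : V) : M \in unitmx -> acts_as M y y' -> acts_as M z z' ->
  adj w y z -> adj w y' z'.
Proof.
move=> uM hy hz [L [L' [hL [hL' [s1 s2]]]]].
exists (img M L), (img M L'); split; first by apply/hy; exists L.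
split; first by apply/hz; exists L'.
split; last exact: strict_img.
rewrite -img_scale; exact: strict_img.
Qed.

Lemma walk_map (f : V -> V) : (forall y z, adj w y z -> adj w (f y) (f z)) ->
  forall y z n, walk w y z n -> walk w (f y) (f z) n.
Proof.
move=> hf y z n; elim => [u|a b c m hab _ ih]; first exact: walk0.
exact: walkS (hf _ _ hab) ih.
Qed.

Lemma walk_app (y z u : V) m n : walk w y z m -> walk w z u n -> walk w y u (m + n).
Proof.
elim => [a|a b c k hab _ ih] h //; rewrite addSn; exact: walkS hab (ih h).
Qed.

Lemma walk_rev (y z : V) n : walk w y z n -> walk w z y n.
Proof.
elim => [a|a b c k hab _ ih]; first exact: walk0.
have := walk_app ih (walkS (adj_sym hab) (walk0 w a)); by rewrite addn1.
Qed.

Lemma dist_le_trans (y z u : V) m n : dist_le w y z m -> dist_le w z u n -> dist_le w y u (m + n).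
Proof.
move=> [m' hm hy] [n' hn hz]; exists (m' + n')%N; first exact: leq_add.
exact: walk_app hy hz.
Qed.

Lemma dist_le_mono (y z : V) m n : dist_le w y z m -> (m <= n)%N -> dist_le w y z n.
Proof. by move=> [k hk hw'] hmn; exists k => //; exact: leq_trans hk hmn. Qed.

Lemma dist_le_sym (y z : V) n : dist_le w y z n -> dist_le w z y n.
Proof. by move=> [k hk h]; exists k => //; exact: walk_rev. Qed.

Lemma dist_le_refl (y : V) n : dist_le w y y n.
Proof. by exists 0%N => //; exact: walk0. Qed.

Lemma dist_le_adj (y z : V) : adj w y z -> dist_le w y z 1.
Proof. by move=> h; exists 1%N => //; exact: walkS h (walk0 w z). Qed.

Lemma dist_le1 (y z : V) : dist_le w y z 1 -> y = z \/ adj w y z.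
Proof.
move=> [k hk h]; case: k hk h => [|[|k]] // _ h.
- by inversion h; left.
- inversion h; subst. inversion H3; subst. by right.
Qed.

Lemma dist_le0 (y z : V) : dist_le w y z 0 -> y = z.
Proof. by move=> [k hk h]; case: k hk h => // _ h; inversion h. Qed.

End Adj.


Section Dist.
Variables (F : fieldType) (v : F -> int).
Hypothesis hv : is_discrete_valuation v.
Variable (w : F).
Hypotheses (hw0 : w != 0) (hw : v w = 1).
Local Notation V := (Vertex v).

Definition Dle (C : 'M[F]_2) (n : nat) :=
  exists k : int, allge v C k /\ v (\det C) - (k + k) <= n%:Z.

Lemma walk_D (y z : V) n : walk w y z n -> forall B B', rep y B -> rep z B' ->
  Dle (B' *m invmx B) n.
Proof.
elim => [a|a b c m hab _ ih] B B' hB hB'.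
- have [c [U [nc hU e]]] := rep_rel hv hB hB'.
  have [uB _] := hB.
  exists (v c); split.
  + rewrite e -scalemxAl mulmxK //; rewrite -[v c]addr0; apply: (allge_scale hv) (gv_v v c) _.
    by case: hU.
  + rewrite e -scalemxAl mulmxK // detZ (vM hv) ?expf_neq0 //; last by case: (GL2o_det hv hU).
    rewrite expr2 (vM hv) //; have [_ ->] := GL2o_det hv hU; set zz := v c; lia.
- have [T [hT nT vT hTB]] := adj_T hv hw0 hw hab hB.
  have [k [hk hd]] := ih _ _ hTB hB'.
  have [uB _] := hB; have [uB' _] := hB'.
  have uT : T \in unitmx by rewrite unitmxE unitfE.
  have e : B' *m invmx B = B' *m invmx (T *m B) *m T.
    by rewrite (invmxM uT uB) !mulmxA mulmxKV.
  exists k; split.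
  + rewrite e -[k]addr0; exact: (allge_mul hv).
  + have uC : B' *m invmx (T *m B) \in unitmx by rewrite unitmx_mul uB' unitmx_inv unitmx_mul uT uB.
    have nC : \det (B' *m invmx (T *m B)) != 0 by rewrite -unitfE -unitmxE.
    rewrite e det_mulmx (vM hv) // vT.
    move: hd; set d := v _; lia.
Qed.

Lemma dist_D (y z : V) n B B' : dist_le w y z n -> rep y B -> rep z B' -> Dle (B' *m invmx B) n.
Proof.
move=> [m hm hwk] hB hB'; have [k [hk hd]] := walk_D hwk hB hB'.
exists k; split => //; apply: le_trans hd _; rewrite lez_nat; exact: hm.
Qed.

End Dist.



Section Apt.
Variables (F : fieldType) (v : F -> int).
Hypothesis hv : is_discrete_valuation v.
Variable (w : F).
Hypotheses (hw0 : w != 0) (hw : v w = 1).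
Local Notation V := (Vertex v).

Definition dg (j : int) : 'M[F]_2 := mk2 (w ^ j) 0 0 1.

Lemma wXnz j : w ^ j != 0. Proof. exact: expfz_neq0. Qed.
Hint Resolve wXnz : core.

Lemma dg_unit j : dg j \in unitmx.
Proof. by rewrite mk2_unit mulr1 mulr0 subr0. Qed.

Lemma dg0 : dg 0 = 1%:M. Proof. by rewrite /dg expr0z mk2_one. Qed.

Lemma repU (y : V) B U : rep y B -> GL2o v U -> rep y (U *m B).
Proof. by move=> hB hU; have := rep_GL hv hB (oner_neq0 F) hU; rewrite scale1r. Qed.

Lemma GL2o_low t : ge_val v t 0 -> GL2o v (mk2 1 0 t 1).
Proof.
move=> ht; apply: gl2o_mk2 => //; try exact: gv0; try exact: (gv1 hv);
  by rewrite ?mulr0 ?mul0r ?mulr1 ?subr0 ?oner_eq0 ?(v1 hv).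
Qed.

Lemma gv_wX_o (a : F) (j : int) : ge_val v a 0 -> 0 <= j -> ge_val v (a * w ^ j) 0.
Proof.
move=> ha hj; rewrite -[(0:int)]addr0; apply: (gvM hv) => //.
apply: gv_le (gv_wX hv hw0 hw j) hj.
Qed.

Lemma dg_low (a : F) (b j : int) :
  dg j *m mk2 1 0 (a * w ^ b) 1 = mk2 1 0 (a * w ^ (b - j)) 1 *m dg j.
Proof.
have e : w ^ b = w ^ (b - j) * w ^ j by rewrite -(wXD hw0) subrK.
rewrite /dg !mk2_mul e; congr mk2; ring.
Qed.

Lemma dg_up (a : F) (b j : int) :
  dg j *m mk2 1 (a * w ^ b) 0 1 = mk2 1 (a * w ^ (b + j)) 0 1 *m dg j.
Proof.
rewrite /dg !mk2_mul (wXD hw0); congr mk2; ring.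
Qed.

Section Path.
Variable z : int -> V.
Hypothesis hz : is_biinf_path w z.

Definition Inv (a b : int) (P : 'M[F]_2) :=
  forall j : int, - a <= j -> j <= b -> rep (z j) (dg j *m P).

Lemma step0 : exists P, Inv 0 1 P.
Proof.
have [P0 h0] := rep_exists (z 0).
have hadj : adj w (z 0) (z 1) by have := hz.1 0; rewrite add0r.
have [T [hT nT vT hTB]] := adj_T hv hw0 hw hadj h0.
have [U [hU [[al [hal eT]]|eT]]] := lowerH hv hw0 hw hT nT vT.
- exists (mk2 1 0 al 1 *m P0) => j hj1 hj2.
  have [->|->] : j = 0 \/ j = 1 by lia.
  + by rewrite dg0 mul1mx; apply: repU => //; exact: GL2o_low.
  + have e : dg 1 *m (mk2 1 0 al 1 *m P0) = invmx U *m (T *m P0).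
      have uU : U \in unitmx by case: hU.
      rewrite eT -mulmxA mulKmx // mulmxA /dg expr1z mk2_mul; congr (_ *m _); congr mk2; ring.
    rewrite e; apply: repU => //; exact: GL2o_inv.
- exists (mk2 0 1 1 0 *m P0) => j hj1 hj2.
  have [->|->] : j = 0 \/ j = 1 by lia.
  + by rewrite dg0 mul1mx; apply: repU => //; exact: GL2o_J.
  + have e : dg 1 *m (mk2 0 1 1 0 *m P0) = mk2 0 1 1 0 *m invmx U *m (T *m P0).
      have uU : U \in unitmx by case: hU.
      rewrite eT -!mulmxA mulKmx // !mulmxA /dg expr1z !mk2_mul.
      congr (_ *m _); congr mk2; ring.
    rewrite e; apply: repU => //; apply: (GL2o_mul hv); [exact: GL2o_J | exact: GL2o_inv].
Qed.


Lemma stepP a b P : 0 <= a -> 1 <= b -> Inv a b P ->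
  exists al, ge_val v al 0 /\ Inv a (b + 1) (mk2 1 0 (al * w ^ b) 1 *m P).
Proof.
move=> ha hb hI.
have hB := hI b ltac:(lia) (lexx _).
have hadj : adj w (z b) (z (b + 1)) := hz.1 b.
have [T [hT nT vT hTB]] := adj_T hv hw0 hw hadj hB.
have [U [hU [[al [hal eT]]|eT]]] := lowerH hv hw0 hw hT nT vT; have uU : U \in unitmx by case: hU.
- exists al; split => // j hj1 hj2.
  have [hj|->] : j <= b \/ j = b + 1 by lia.
  + rewrite mulmxA dg_low -mulmxA; apply: repU; first exact: hI.
    apply: GL2o_low; apply: gv_wX_o => //; lia.
  + have e : dg (b + 1) *m (mk2 1 0 (al * w ^ b) 1 *m P) = invmx U *m (T *m (dg b *m P)).
      rewrite eT -mulmxA mulKmx // !mulmxA /dg (wXD hw0) expr1z !mk2_mul.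
      congr (_ *m _); congr mk2; ring.
    rewrite e; apply: repU => //; exact: GL2o_inv.
- exfalso; apply: (hz.2 b).
  have e : invmx U *m (T *m (dg b *m P)) = w *: (dg (b - 1) *m P).
    rewrite eT -mulmxA mulKmx // mulmxA scalemxAl /dg.
    have ew : w ^ b = w ^ (b - 1) * w by rewrite -[in LHS](subrK 1 b) (wXD hw0) expr1z.
    rewrite mk2_mul mk2_scale ew; congr (_ *m _); congr mk2; ring.
  have h1 : rep (z (b + 1)) (w *: (dg (b - 1) *m P)) by rewrite -e; apply: repU => //; exact: GL2o_inv.
  have h2 : rep (z (b + 1)) (dg (b - 1) *m P).
    have := rep_scale hv h1 (invr_neq0 hw0); by rewrite scalerA mulVf // scale1r.
  exact: vert_eq h2 (hI (b - 1) ltac:(lia) ltac:(lia)).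
Qed.

Lemma stepN a b P : 0 <= a -> 1 <= b -> Inv a b P ->
  exists be, ge_val v be 0 /\ Inv (a + 1) b (mk2 1 (be * w ^ a) 0 1 *m P).
Proof.
move=> ha hb hI.
have hB := hI (- a) (lexx _) ltac:(lia).
have hadj : adj w (z (- a)) (z (- a - 1)).
  apply: adj_sym; have := hz.1 (- a - 1); by rewrite subrK.
have [T [hT nT vT hTB]] := adj_T hv hw0 hw hadj hB.
have [U [hU [[be [hbe eT]]|eT]]] := upperH hv hw0 hw hT nT vT; have uU : U \in unitmx by case: hU.
- exists be; split => // j hj1 hj2.
  have [hj|->] : - a <= j \/ j = - a - 1 by lia.
  + rewrite mulmxA dg_up -mulmxA; apply: repU; first exact: hI.
    apply: GL2o_up => //; apply: gv_wX_o => //; lia.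
  + have e : dg (- a - 1) *m (mk2 1 (be * w ^ a) 0 1 *m P) = w^-1 *: (invmx U *m (T *m (dg (- a) *m P))).
      rewrite eT -mulmxA mulKmx // !mulmxA scalemxAl /dg.
      have e1 : w ^ (- a) = w ^ (- a - 1) * w by rewrite -[in LHS](subrK 1 (- a)) (wXD hw0) expr1z.
      have e2 : w ^ a = (w ^ (- a))^-1 by rewrite invr_expz opprK.
      have n1 : w ^ (- a - 1) != 0 by [].
      rewrite !mk2_mul mk2_scale e2 e1; congr (_ *m _); congr mk2; fieldnz.
    rewrite e; apply: (rep_scale hv); last by rewrite invr_neq0.
    apply: repU => //; exact: GL2o_inv.
- exfalso; apply: (hz.2 (- a)).
  have e : invmx U *m (T *m (dg (- a) *m P)) = dg (- a + 1) *m P.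
    rewrite eT -mulmxA mulKmx // mulmxA /dg (wXD hw0) expr1z mk2_mul.
    congr (_ *m _); congr mk2; ring.
  have h1 : rep (z (- a - 1)) (dg (- a + 1) *m P) by rewrite -e; apply: repU => //; exact: GL2o_inv.
  exact: vert_eq (hI (- a + 1) ltac:(lia) ltac:(lia)) h1.
Qed.

Lemma stepNP (n : nat) P : Inv n (n + 1) P ->
  exists P' M, [/\ Inv (n + 1) (n + 2) P', P' = M *m P, GL2o v M & allge v (M - 1%:M) n].
Proof.
move=> hI.
have [al [hal hI1]] := stepP (ltac:(lia) : 0 <= n%:Z) (ltac:(lia) : 1 <= n%:Z + 1) hI.
have [be [hbe hI2]] := stepN (ltac:(lia) : 0 <= n%:Z) (ltac:(lia) : 1 <= n%:Z + 1 + 1) hI1.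
exists (mk2 1 (be * w ^ n) 0 1 *m (mk2 1 0 (al * w ^ (n%:Z + 1)) 1 *m P)).
exists (mk2 1 (be * w ^ n) 0 1 *m mk2 1 0 (al * w ^ (n%:Z + 1)) 1); split.
- have e : n%:Z + 1 + 1 = n%:Z + 2 by ring.
  by rewrite e in hI2.
- by rewrite mulmxA.
- apply: (GL2o_mul hv); [apply: (GL2o_up hv) | apply: GL2o_low]; apply: gv_wX_o => //; lia.
- rewrite mk2_mul mk2_one mk2_opp mk2_add allge_mk2.
  have g1 : ge_val v (be * w ^ n) n by rewrite -[n%:Z]add0r; apply: (gvM hv) => //; exact: gv_wX.
  have g2' : ge_val v (al * w ^ (n%:Z + 1)) (0 + (n%:Z + 1)) by apply: (gvM hv) => //; exact: gv_wX.
  have g2 : ge_val v (al * w ^ (n%:Z + 1)) n by apply: gv_le g2' _; lia.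
  split; rewrite ?mulr1 ?mul1r ?mulr0 ?addr0 ?add0r ?subrr ?oppr0 ?addr0 //; try exact: gv0.
  rewrite addrC addKr; apply: gv_le; first exact: (gvM hv) g1 g2.
  lia.
Qed.

Fixpoint iterS (f : nat -> 'M[F]_2 -> 'M[F]_2) (P0 : 'M[F]_2) (n : nat) : 'M[F]_2 :=
  match n with 0%N => P0 | m.+1 => f m (iterS f P0 m) end.

End Path.

Lemma limit_entry (u : nat -> F) (K : int) : is_complete v ->
  (forall n d, ge_val v (u (n + d)%N - u n) (n%:Z + K)) ->
  exists l, forall k, exists N, forall n, (N <= n)%N -> ge_val v (u n - l) k.
Proof.
move=> hc hu; apply: hc => k.
exists (absz (k - K)) => m n hm hn.
have gen : forall a b, (absz (k - K) <= a)%N -> (a <= b)%N -> ge_val v (u b - u a) k.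
  move=> a b ha hab; have := hu a (b - a)%N; rewrite subnKC // => h.
  apply: gv_le h _; move: ha; lia.
case: (leqP n m) => h.
- exact: gen.
- rewrite -opprB; apply/(gvN hv); apply: gen => //; exact: ltnW.
Qed.

Lemma exists_allge (M : 'M[F]_2) : exists K, allge v M K.
Proof.
exists (Num.min (v (M 0 0)) (Num.min (v (M 0 1)) (Num.min (v (M 1 0)) (v (M 1 1))))).
apply/allgeP; split; [set x := M 0 0|set x := M 0 1|set x := M 1 0|set x := M 1 1];
  (case: (eqVneq x 0) => [->|nx]; [exact: gv0| right]);
  rewrite ?ge_min ?lexx ?orbT //.
Qed.

Lemma allge0 k : allge v (0 : 'M[F]_2) k.
Proof. by move=> i j; rewrite mxE; exact: gv0. Qed.

Lemma apartment (z : int -> V) : is_biinf_path w z -> is_complete v ->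
  exists P, P \in unitmx /\ forall j, rep (z j) (dg j *m P).
Proof.
move=> hz hc.
have [P0 h0] := step0 hz.
have step : forall (n : nat) (P : 'M[F]_2), exists P', Inv z n (n + 1) P ->
    exists M, [/\ Inv z (n + 1) (n + 2) P', P' = M *m P, GL2o v M & allge v (M - 1%:M) n].
  move=> n P; case: (classic (Inv z n (n + 1) P)) => h.
  - by have [P' [M hh]] := stepNP hz h; exists P' => _; exists M.
  - by exists P => h'.
pose f := fun n P => proj1_sig (constructive_indefinite_description _ (step n P)).
have hf : forall (n : nat) P, Inv z n (n + 1) P -> exists M,
    [/\ Inv z (n + 1) (n + 2) (f n P), f n P = M *m P, GL2o v M & allge v (M - 1%:M) n].
  by move=> n P; exact: (proj2_sig (constructive_indefinite_description _ (step n P))).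
pose Ps := iterS f P0.
have inv : forall n : nat, Inv z n (n + 1) (Ps n) /\ exists U, GL2o v U /\ Ps n = U *m P0.
  elim => [|n [ih [U [hU eU]]]].
  - split; first exact: h0.
    by exists 1%:M; split; [exact: (GL2o_1 hv)|rewrite mul1mx].
  - have [M [h1 h2 h3 h4]] := hf n (Ps n) ih.
    split.
    + have e1 : (n.+1)%:Z = n%:Z + 1 by lia.
      have e2 : n%:Z + 1 + 1 = n%:Z + 2 by ring.
      have e : Inv z (n + 1)%N (n + 2)%N (Ps n.+1) := h1.
      rewrite -[(n.+1 + 1)%R]/(n.+1 + 1)%N addn1.
      move: e; rewrite addn1 addn2; exact.
    + exists (M *m U); split; first exact: (GL2o_mul hv).
      by change (Ps n.+1) with (f n (Ps n)); rewrite h2 eU mulmxA.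
have uP0 : P0 \in unitmx by have [] := h0 0 (lexx _) ler01; rewrite dg0 mul1mx.
have [K0 hK0] := exists_allge P0.
have [K1 hK1] := exists_allge (invmx P0).
have diff : forall n : nat, allge v (Ps n.+1 - Ps n) (n%:Z + K0).
  move=> n; have [ih [U [hU eU]]] := inv n.
  have [M [h1 h2 h3 h4]] := hf n (Ps n) ih.
  have -> : Ps n.+1 - Ps n = (M - 1%:M) *m Ps n.
    by change (Ps n.+1) with (f n (Ps n)); rewrite mulmxBl mul1mx h2.
  apply: (allge_mul hv) => //; rewrite eU -[K0]add0r; apply: (allge_mul hv) => //; by case: hU.
have tel : forall n d : nat, allge v (Ps (n + d)%N - Ps n) (n%:Z + K0).
  move=> n; elim => [|d ih]; first by rewrite addn0 subrr; exact: allge0.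
  have -> : Ps (n + d.+1)%N - Ps n = (Ps (n + d).+1 - Ps (n + d)%N) + (Ps (n + d)%N - Ps n).
    by rewrite addnS addrA subrK.
  apply: (allge_add hv) => //; apply: allge_le (diff _) _; lia.
have ent : forall i j, exists l, forall k, exists N, forall n, (N <= n)%N -> ge_val v (Ps n i j - l) k.
  move=> i j; apply: (limit_entry (K := K0)) hc _ => n d.
  have := tel n d i j; by rewrite !mxE.
have [l00 h00] := ent 0 0; have [l01 h01] := ent 0 1.
have [l10 h10] := ent 1 0; have [l11 h11] := ent 1 1.
pose P := mk2 l00 l01 l10 l11.
have conv : forall k, exists N, forall n, (N <= n)%N -> allge v (Ps n - P) k.
  move=> k; have [N1 g1] := h00 k; have [N2 g2] := h01 k.
  have [N3 g3] := h10 k; have [N4 g4] := h11 k.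
  exists (maxn N1 (maxn N2 (maxn N3 N4))) => n hn; apply/allgeP.
  rewrite !mxE /=; split; [apply: g1|apply: g2|apply: g3|apply: g4]; move: hn; lia.
have main : forall j : int, rep (z j) (dg j *m P).
  move=> j; set J := (absz j)%:Z.
  have [N0 hN0] := conv (J + 1 - K1).
  set N := maxn N0 (absz j).
  have [hIN [U [hU eU]]] := inv N.
  have hPN := hN0 N (leq_maxl _ _).
  have hzj : rep (z j) (dg j *m Ps N) by apply: hIN; rewrite /N; lia.
  have uU : U \in unitmx by case: hU.
  have uPN : Ps N \in unitmx by rewrite eU unitmx_mul uU uP0.
  have hinv : allge v (invmx (Ps N)) K1.
    rewrite eU (invmxM uU uP0) -[K1]addr0; apply: (allge_mul hv) => //; by case: hU.
  pose E := (P - Ps N) *m invmx (Ps N).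
  have hE : allge v E (J + 1).
    have -> : J + 1 = (J + 1 - K1) + K1 by rewrite subrK.
    apply: (allge_mul hv) => //.
    by rewrite -opprB; apply: (allge_opp hv).
  have eP : P = (1%:M + E) *m Ps N by rewrite mulmxDl mul1mx /E mulmxKV // addrC subrK.
  have ej : w ^ (- j) = (w ^ j)^-1 by rewrite invr_expz.
  have edg : dg (- j) *m dg j = 1%:M.
    have nj := wXnz j.
    by rewrite /dg mk2_mul mk2_one ej; congr mk2; fieldnz.
  have eG : dg j *m P = (dg j *m (1%:M + E) *m dg (- j)) *m (dg j *m Ps N).
    by rewrite eP !mulmxA -(mulmxA _ (dg (- j))) edg mulmx1.
  rewrite eG; apply: repU => //.
  move: hE; rewrite [E]mk2E allgeP !mk2_00 !mk2_01 !mk2_10 !mk2_11.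
  have nj := wXnz j.
  set e00 := E 0 0; set e01 := E 0 1; set e10 := E 1 0; set e11 := E 1 1.
  move=> [g00 g01 g10 g11].
  have -> : dg j *m (1%:M + mk2 e00 e01 e10 e11) *m dg (- j) =
            mk2 (1 + e00) (w ^ j * e01) (w ^ (- j) * e10) (1 + e11).
    rewrite mk2_one mk2_add /dg !mk2_mul ej; congr mk2; fieldnz.
  have gJ : forall x, ge_val v x (J + 1) -> ge_val v x 1 by move=> x hx; apply: gv_le hx _; lia.
  have ed : (1 + e00) * (1 + e11) - w ^ j * e01 * (w ^ (- j) * e10) =
            1 + (e00 + e11 + e00 * e11 - e01 * e10).
    rewrite ej; fieldnz.
  have geps : ge_val v (e00 + e11 + e00 * e11 - e01 * e10) 1.
    apply: (gvB hv); [apply: (gvD hv); [apply: (gvD hv)|]|]; try exact: gJ.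
    + apply: gv_le; first exact: (gvM hv) g00 g11. lia.
    + apply: gv_le; first exact: (gvM hv) g01 g10. lia.
  have [n1 v1'] := v1e hv geps.
  apply: gl2o_mk2; rewrite ?ed //.
  + by apply: (gvD hv); [exact: (gv1 hv)| apply: gv_le g00 _; lia].
  + by apply: gv_le; [exact: (gvM hv) (gv_wX hv hw0 hw j) g01|lia].
  + by apply: gv_le; [exact: (gvM hv) (gv_wX hv hw0 hw (- j)) g10|lia].
  + by apply: (gvD hv); [exact: (gv1 hv)| apply: gv_le g11 _; lia].
exists P; split => //.
by have [] := main 0; rewrite dg0 mul1mx.
Qed.

End Apt.



Section Geo.
Variables (F : fieldType) (v : F -> int).
Hypothesis hv : is_discrete_valuation v.
Variable (w : F).
Hypotheses (hw0 : w != 0) (hw : v w = 1).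
Local Notation V := (Vertex v).
Local Notation dg := (dg w).

Lemma wnz j : w ^ j != 0. Proof. exact: expfz_neq0. Qed.
Hint Resolve wnz : core.

Lemma dg_mul a b : dg a *m dg b = dg (a + b).
Proof. by rewrite /dg mk2_mul (wXD hw0); congr mk2; ring. Qed.

Lemma dg_inv a : invmx (dg a) = dg (- a).
Proof.
have u := dg_unit hw0 a.
by rewrite -[invmx _]mulmx1 -(dg0 w) -(subrr a) -dg_mul mulmxA mulVmx // mul1mx.
Qed.

Lemma gv_unw x k t : ge_val v (x * w ^ t) k -> ge_val v x (k - t).
Proof.
move=> h; have e : x = x * w ^ t * w ^ (- t) by rewrite -invr_expz mulfK.
rewrite e; apply: (gvM hv) h _; exact: (gv_wX hv hw0 hw).
Qed.

Lemma DleW (W : 'M[F]_2) (t : int) n : W \in unitmx -> Dle v (W *m dg t) n ->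
  exists k, [/\ ge_val v (W 0 0) (k - t), ge_val v (W 1 0) (k - t), ge_val v (W 0 1) k,
             ge_val v (W 1 1) k & v (\det W) + t - (k + k) <= n%:Z].
Proof.
move=> uW [k [hk hd]]; exists k.
move: hk hd; rewrite [W]mk2E /dg mk2_mul allge_mk2 !mk2_00 !mk2_01 !mk2_10 !mk2_11.
rewrite !mulr0 !addr0 !add0r !mulr1 => -[h1 h2 h3 h4] hd.
split => //; try exact: gv_unw.
have nW : \det W != 0 by rewrite -unitfE -unitmxE.
move: hd; rewrite !mk2_det.
have -> : W 0 0 * w ^ t * W 1 1 - W 0 1 * (W 1 0 * w ^ t) = (W 0 0 * W 1 1 - W 0 1 * W 1 0) * w ^ t by ring.
move: nW; rewrite [W]mk2E mk2_det !mk2_00 !mk2_01 !mk2_10 !mk2_11 => nW.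
by rewrite (vM hv) // (vX hv hw0 hw).
Qed.

Lemma ge_v x k : x != 0 -> ge_val v x k -> k <= v x.
Proof. by move=> nx /(gvE v _ nx). Qed.

Section Line.
Variable x : int -> V.
Variable P : 'M[F]_2.
Hypothesis uP : P \in unitmx.
Hypothesis hP : forall j, rep (x j) (dg j *m P).

Lemma line_lower a b n : dist_le w (x a) (x b) n -> b - a <= n%:Z /\ a - b <= n%:Z.
Proof.
move=> h; have hD := dist_D hv hw0 hw h (hP a) (hP b).
have e : dg b *m P *m invmx (dg a *m P) = dg b *m dg (- a).
  by rewrite (invmxM (dg_unit hw0 a) uP) mulmxA mulmxK // dg_inv.
rewrite e in hD; have [k [g1 g2 g3 g4 hd]] := DleW (dg_unit hw0 b) hD.
move: g1 g4 hd; rewrite /dg !mk2_00 !mk2_11 mk2_det mulr1 mulr0 subr0 (vX hv hw0 hw).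
move=> /(ge_v (wnz _)) ; rewrite (vX hv hw0 hw) => g1 /(ge_v (oner_neq0 _)); rewrite (v1 hv) => g4 hd.
lia.
Qed.

Hypothesis hx : is_biinf_path w x.

Lemma walk_line a (d : nat) : walk w (x a) (x (a + d%:Z)) d.
Proof.
elim: d => [|d ih]; first by rewrite addr0; exact: walk0.
have := walk_app ih (walkS (hx.1 (a + d%:Z)) (walk0 w _)).
have -> : a + (d.+1)%:Z = a + d%:Z + 1 by lia.
by rewrite addn1.
Qed.

Lemma dist_line a b : dist_le w (x a) (x b) (absz (b - a)).
Proof.
have [hab|hab] := lerP a b.
- exists (absz (b - a)) => //.
  have := walk_line a (absz (b - a)); have -> : a + (absz (b - a))%:Z = b by lia. done.
- apply: (dist_le_sym hw0); exists (absz (a - b)); first by lia.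
  have := walk_line b (absz (a - b)); have -> : b + (absz (a - b))%:Z = a by lia. done.
Qed.

Lemma exact_min (p r : F) : p != 0 \/ r != 0 ->
  exists A, [/\ ge_val v p A, ge_val v r A & forall k, ge_val v p k -> ge_val v r k -> k <= A].
Proof.
case: (eqVneq p 0) => [->|np] h.
- have nr : r != 0 by case: h => //; rewrite eqxx.
  exists (v r); split; [exact: gv0|exact: gv_v|by move=> k _ /(ge_v nr)].
- case: (eqVneq r 0) => [->|nr].
  + exists (v p); split; [exact: gv_v|exact: gv0|by move=> k /(ge_v np)].
  + exists (Num.min (v p) (v r)); split.
    * by right; rewrite ge_min lexx.
    * by right; rewrite ge_min lexx orbT.
    * by move=> k /(ge_v np) h1 /(ge_v nr) h2; rewrite le_min h1 h2.
Qed.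

Lemma geod a b c (y : V) : a <= c -> c <= b ->
  dist_le w (x a) y (absz (c - a)) -> dist_le w y (x b) (absz (b - c)) -> y = x c.
Proof.
move=> hac hcb h1 h2.
have [Bw hBw] := rep_exists y; have [uBw _] := hBw.
set W := Bw *m invmx P.
have uW : W \in unitmx by rewrite unitmx_mul uBw unitmx_inv.
have eB : Bw = W *m P by rewrite /W mulmxKV.
have eC : forall t, Bw *m invmx (dg t *m P) = W *m dg (- t).
  by move=> t; rewrite (invmxM (dg_unit hw0 t) uP) mulmxA dg_inv.
set p := W 0 0; set q := W 0 1; set r := W 1 0; set s := W 1 1.
have nW : \det W != 0 by rewrite -unitfE -unitmxE.
have edW : \det W = p * s - q * r by rewrite {1}[W]mk2E mk2_det.
have npr : p != 0 \/ r != 0.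
  case: (eqVneq p 0) => [p0|]; last by left.
  case: (eqVneq r 0) => [r0|]; last by right.
  by move: nW; rewrite edW p0 r0 !mul0r mulr0 subrr eqxx.
have nqs : q != 0 \/ s != 0.
  case: (eqVneq q 0) => [q0|]; last by left.
  case: (eqVneq s 0) => [s0|]; last by right.
  by move: nW; rewrite edW q0 s0 !mul0r mulr0 subrr eqxx.
have [A [gpA grA mA]] := exact_min npr.
have [Bm [gqB gsB mB]] := exact_min nqs.
set d := v (\det W).
have hdA : A + Bm <= d.
  rewrite /d; apply: ge_v nW _; rewrite edW; apply: (gvB hv); [exact: (gvM hv) | rewrite addrC; exact: (gvM hv)].
set a' := Num.min a (A - Bm); set b' := Num.max b (A - Bm).
have ha' : a' <= a by rewrite ge_min lexx.
have ha'2 : a' <= A - Bm by rewrite ge_min lexx orbT.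
have hb' : b <= b' by rewrite le_max lexx.
have hb'2 : A - Bm <= b' by rewrite le_max lexx orbT.
have d1 : dist_le w (x a') y (absz (c - a')).
  have := dist_le_trans (dist_line a' a) h1.
  have -> : (absz (a - a') + absz (c - a))%N = absz (c - a') by lia. done.
have d2 : dist_le w (x b') y (absz (b' - c)).
  apply: (dist_le_sym hw0); have := dist_le_trans h2 (dist_line b b').
  have -> : (absz (b - c) + absz (b' - b))%N = absz (b' - c) by lia. done.
have D1 := dist_D hv hw0 hw d1 (hP a') hBw; rewrite eC in D1.
have D2 := dist_D hv hw0 hw d2 (hP b') hBw; rewrite eC in D2.
have [k1 [e1 e2 e3 e4 e5]] := DleW uW D1.
have [k2 [f1 f2 f3 f4 f5]] := DleW uW D2.
have i1 := mA _ e1 e2; have i2 := mB _ e3 e4.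
have i3 := mA _ f1 f2; have i4 := mB _ f3 f4.
rewrite -/d in e5 f5.
have hc : c = A - Bm by move: e5 f5; lia.
have hd : d = A + Bm by move: e5 f5; lia.
pose U := mk2 (p * w ^ (- A)) (q * w ^ (- Bm)) (r * w ^ (- A)) (s * w ^ (- Bm)).
have eW : W = w ^ Bm *: (U *m dg c).
  rewrite {1}[W]mk2E /U /dg mk2_mul mk2_scale hc.
  have eA : w ^ (- A) = (w ^ A)^-1 by rewrite invr_expz.
  have eB' : w ^ (- Bm) = (w ^ Bm)^-1 by rewrite invr_expz.
  have eAB : w ^ (A - Bm) = w ^ A * (w ^ Bm)^-1 by rewrite (wXD hw0) invr_expz.
  have nA := wnz A; have nB := wnz Bm.
  rewrite eA eB' eAB; congr mk2; rewrite /p /q /r /s; fieldnz.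
have hU : GL2o v U.
  have g : forall u k, ge_val v u k -> ge_val v (u * w ^ (- k)) 0.
    move=> u k hu; have hh := @gvM _ _ hv u (w ^ (- k)) k (- k) hu (gv_wX hv hw0 hw (- k)).
    by rewrite subrr in hh.
  apply: (gl2o_mk2 hv); try exact: g.
  - have -> : p * w ^ (- A) * (s * w ^ (- Bm)) - q * w ^ (- Bm) * (r * w ^ (- A)) =
              (p * s - q * r) * (w ^ (- A) * w ^ (- Bm)) by ring.
    by rewrite mulf_neq0 // -?edW ?mulf_neq0.
  - have -> : p * w ^ (- A) * (s * w ^ (- Bm)) - q * w ^ (- Bm) * (r * w ^ (- A)) =
              (p * s - q * r) * (w ^ (- A) * w ^ (- Bm)) by ring.
    rewrite -edW (vM hv) ?mulf_neq0 // (vM hv) // !(vX hv hw0 hw) -/d hd; lia.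
have eBw : Bw = w ^ Bm *: (U *m (dg c *m P)) by rewrite eB eW -scalemxAl mulmxA.
have r1 : rep (x c) (w ^ Bm *: (U *m (dg c *m P))) := rep_GL hv (hP c) (wnz Bm) hU.
have r2 : rep y (w ^ Bm *: (U *m (dg c *m P))) by rewrite -eBw.
exact: (vert_eq r2 r1).
Qed.

End Line.
End Geo.


Section Grp.
Variables (F : fieldType) (v : F -> int).
Hypothesis hv : is_discrete_valuation v.
Variable (w : F).
Hypotheses (hw0 : w != 0) (hw : v w = 1).
Variable e : nat.
Local Notation V := (Vertex v).

Lemma aut_adj (g : V -> V) y z : isAut w g -> adj w y z -> adj w (g y) (g z).
Proof.
move=> [bg hg] h.
have := (hg y z 1%N).2 (dist_le_adj h).
case/dist_le1 => // eq.
have := bij_inj bg eq => ey; rewrite ey in h.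
by case: (adj_noloop hv hw0 hw h).
Qed.

Lemma inGhat_id : inGhat w e (@id V).
Proof.
split; first by split; [by exists id|].
move=> y1 y2 _; exists 1%:M; first exact: unitmx1.
move=> y _; exact: acts_as_1.
Qed.

Lemma ball_map (g : V -> V) y1 y2 y : isAut w g -> in_ball w y1 y2 e y -> in_ball w (g y1) (g y2) e (g y).
Proof. by move=> [_ hg] [h|h]; [left|right]; apply/hg. Qed.

Lemma inGhat_comp (g h : V -> V) : inGhat w e g -> inGhat w e h -> inGhat w e (g \o h).
Proof.
move=> [ag lg] [ah lh]; split.
- split; first by apply: bij_comp; [case: ag|case: ah].
  move=> y z n /=; rewrite (ag.2 (h y) (h z) n); exact: ah.2.
- move=> y1 y2 hadj.
  have [Mh uh hh] := lh _ _ hadj.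
  have [Mg ug hg] := lg _ _ (aut_adj ah hadj).
  exists (Mh *m Mg); first by rewrite unitmx_mul uh ug.
  move=> y hy; apply: acts_as_comp (hh _ hy) (hg _ (ball_map ah hy)).
Qed.

Lemma isAut_inv (g g' : V -> V) : isAut w g -> cancel g g' -> cancel g' g -> isAut w g'.
Proof.
move=> [bg hg] c1 c2; split; first by exists g.
move=> y z n; rewrite -(hg (g' y) (g' z) n) !c2; done.
Qed.

Lemma inGhat_inv (g g' : V -> V) : inGhat w e g -> cancel g g' -> cancel g' g -> inGhat w e g'.
Proof.
move=> [ag lg] c1 c2.
have ag' := isAut_inv ag c1 c2.
split => // y1 y2 hadj.
have [M uM hM] := lg _ _ (aut_adj ag' hadj).
exists (invmx M); first by rewrite unitmx_inv.
move=> y hy; apply: acts_as_inv => //.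
have := hM _ (ball_map ag' hy); by rewrite c2.
Qed.

Lemma act_cancel (M : 'M[F]_2) : M \in unitmx -> cancel (@act _ v M) (@act _ v (invmx M)).
Proof.
move=> uM y.
have h1 := acts_as_inv uM (acts_as_act y uM).
have uM' : invmx M \in unitmx by rewrite unitmx_inv.
have h2 := acts_as_act (@act _ v M y) uM'.
by symmetry; exact: acts_as_uniq h1 h2.
Qed.

Lemma act_cancel' (M : 'M[F]_2) : M \in unitmx -> cancel (@act _ v (invmx M)) (@act _ v M).
Proof.
move=> uM; have uM' : invmx M \in unitmx by rewrite unitmx_inv.
by have := act_cancel uM'; rewrite invmxK.
Qed.

Lemma inGhat_act (M : 'M[F]_2) : M \in unitmx -> inGhat w e (@act _ v M).
Proof.
move=> uM.
have uM' : invmx M \in unitmx by rewrite unitmx_inv.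
have adjM : forall (N : 'M[F]_2), N \in unitmx -> forall y z, adj w y z -> adj w (@act _ v N y) (@act _ v N z).
  by move=> N uN y z h; apply: acts_as_adj uN (acts_as_act y uN) (acts_as_act z uN) h.
split.
- split; first by exists (@act _ v (invmx M)); [exact: act_cancel|exact: act_cancel'].
  move=> y z n; split.
  + move=> [k hk hwk]; exists k => //.
    have := @walk_map _ _ w (@act _ v (invmx M)) (adjM _ uM') _ _ _ hwk; by rewrite !act_cancel.
  + by move=> [k hk hwk]; exists k => //; exact: @walk_map _ _ w (@act _ v M) (adjM _ uM) _ _ _ hwk.
- move=> y1 y2 _; exists M => // y _; exact: acts_as_act.
Qed.

End Grp.


Section Main.
Variables (F : fieldType) (v : F -> int).
Hypothesis hv : is_discrete_valuation v.
Variable (w : F).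
Hypotheses (hw0 : w != 0) (hw : v w = 1).
Variable e : nat.
Local Notation V := (Vertex v).
Variable x : int -> V.
Hypothesis hx : is_biinf_path w x.
Variable P : 'M[F]_2.
Hypothesis uP : P \in unitmx.
Hypothesis hP : forall j, rep (x j) (dg w j *m P).

Lemma aut_dist (g : V -> V) a b a' b' : isAut w g -> g (x a) = x a' -> g (x b) = x b' ->
  absz (b - a) = absz (b' - a').
Proof.
move=> [_ hg] ea eb.
have h1 := (hg (x a) (x b) _).2 (dist_line hw0 hw uP hx a b).
rewrite ea eb in h1; have := line_lower hv hw0 hw uP hP h1.
have h2 := dist_line hw0 hw uP hx a' b'; rewrite -ea -eb in h2.
have := line_lower hv hw0 hw uP hP ((hg _ _ _).1 h2).
lia.
Qed.

Lemma fix_shift (g : V -> V) i k N : isAut w g -> g (x i) = x i ->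
  (forall n, 0 <= n -> N <= n -> g (x n) = x (n + k)) ->
  k = 0 /\ forall n, 0 <= n -> N <= n -> g (x n) = x n.
Proof.
move=> ag hi hn.
set m := `|i| + `|N| + `|k| + 1.
have hm : g (x m) = x (m + k) by apply: hn; lia.
have := aut_dist ag hi hm; move=> hd.
have k0 : k = 0 by move: hd; rewrite /m; lia.
split => // n h1 h2; rewrite hn // k0 addr0 //.
Qed.

Lemma inHhat_id : inHhat w e x id.
Proof.
split => //; split; last by exists 0.
split; first exact: inGhat_id.
by exists 0, 0 => n _ _; rewrite addr0.
Qed.

Lemma inHhat_comp h1 h2 : inHhat w e x h1 -> inHhat w e x h2 -> inHhat w e x (h1 \o h2).
Proof.
move=> [[[g1 _] _] f1] [[[g2 _] _] f2].
have fx : forall k, (h1 \o h2) (x k) = x k by move=> k /=; rewrite f2 f1.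
split => //; split; last by exists 0.
split; first exact: inGhat_comp.
by exists 0, 0 => n _ _; rewrite addr0.
Qed.

Lemma inHhat_of (h : V -> V) : inGhat w e h -> (forall k, h (x k) = x k) -> inHhat w e x h.
Proof.
move=> g f; split => //; split; last by exists 0.
split => //; by exists 0, 0 => n _ _; rewrite addr0.
Qed.

Variable alpha : V -> V.
Hypothesis halpha : inGhat w e alpha.
Hypothesis halphax : forall n, alpha (x n) = x (- n).

Lemma N_fix (n : V -> V) : inNhat w e x n -> exists N, forall m, 0 <= m -> N <= m -> n (x m) = x m.
Proof.
move=> [[[gn _] [k [N hN]]] [i hi]].
have [_ h] := fix_shift gn hi hN; by exists N.
Qed.

Lemma HL n1 n2 b1 b2 n2' : inNhat w e x n1 -> inNhat w e x n2 -> inBhat w e x b1 -> inBhat w e x b2 ->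
  n1 \o alpha \o b1 = n2 \o alpha \o b2 -> cancel n2 n2' -> cancel n2' n2 -> inHhat w e x (n2' \o n1).
Proof.
move=> hn1 hn2 [gb1 [c1 [M1 hb1]]] [gb2 [c2 [M2 hb2]]] E k1 k2.
have [N1 f1] := N_fix hn1; have [N2 f2] := N_fix hn2.
have gn1 := hn1.1.1; have gn2 := hn2.1.1.
have gh : inGhat w e (n2' \o n1) by apply: (inGhat_comp hv hw0 hw) => //; exact: (inGhat_inv hv hw0 hw) gn2 k1 k2.
have ah := gh.1.
have f2' : forall m, 0 <= m -> N2 <= m -> n2' (x m) = x m by move=> m h h'; rewrite -{1}(f2 m h h') k1.
have fh : forall m, 0 <= m -> N1 <= m -> N2 <= m -> (n2' \o n1) (x m) = x m.
  by move=> m h h' h''; rewrite /= f1 // f2'.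
have key : forall y, (n2' \o n1) (alpha (b1 y)) = alpha (b2 y).
  by move=> y; have := congr1 (fun f => n2' (f y)) E; rewrite /= k1.
have kp : forall p, 0 <= p -> M1 <= p -> M2 <= p -> (n2' \o n1) (x (- (p + c1))) = x (- (p + c2)).
  by move=> p h h' h''; have := key (x p); rewrite hb1 // hb2 // !halphax.
have [Bd hBd] : exists Bd : int, Bd = `|N1| + `|N2| + `|M1| + `|M2| + `|c1| + `|c2| + 1 by eexists.
have c12 : c1 = c2.
  have := aut_dist ah (kp Bd ltac:(lia) ltac:(lia) ltac:(lia)) (fh Bd ltac:(lia) ltac:(lia) ltac:(lia)).
  lia.
apply: inHhat_of => // k.
have [Bk hBk] : exists Bk : int, Bk = Bd + `|k| by eexists.
have eA := kp Bk ltac:(lia) ltac:(lia) ltac:(lia); rewrite -c12 in eA.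
have eB := fh Bk ltac:(lia) ltac:(lia) ltac:(lia).
apply: (geod hv hw0 hw uP hP hx (a := - (Bk + c1)) (b := Bk)); try lia.
- rewrite -{1}eA; apply/(ah.2); exact: (dist_line hw0 hw uP hx).
- rewrite -{1}eB; apply/(ah.2); exact: (dist_line hw0 hw uP hx).
Qed.

Lemma part2 g : ~ ((exists n b, [/\ inNhat w e x n, inBhat w e x b & g = n \o alpha \o b]) /\ inBhat w e x g).
Proof.
move=> [[n [b [hn [gb [c [M hb]]] eg]]] [gg [k [N hg]]]].
have [N1 f1] := N_fix hn.
have ag := hn.1.1.1.
have [m hm] : exists m : int, m = `|N| + `|N1| + `|M| + `|c| + `|k| + 1 by eexists.
have e1 := hg m ltac:(lia) ltac:(lia).
have e2 : g (x m) = n (x (- (m + c))) by rewrite eg /= hb ?halphax //; lia.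
have e3 := f1 (m + k) ltac:(lia) ltac:(lia).
have ex : x (- (m + c)) = x (m + k) by apply: (bij_inj ag.1); rewrite -e2 e1 e3.
have := line_lower hv hw0 hw uP hP (a := - (m + c)) (b := m + k) (n := 0%N).
rewrite ex => /(_ (dist_le_refl w _ 0%N)); lia.
Qed.

Lemma part3 n1 n2 : inNhat w e x n1 -> inNhat w e x n2 ->
     ((exists g, (exists2 b, inBhat w e x b & g = n1 \o alpha \o b) /\
                 (exists2 b, inBhat w e x b & g = n2 \o alpha \o b))
      <->
      (forall g, (exists2 h, inHhat w e x h & g = n1 \o h) <->
                 (exists2 h, inHhat w e x h & g = n2 \o h))).
Proof.
move=> hn1 hn2.
have [al' ca1 ca2] := halpha.1.1.
have [n1' k11 k12] := hn1.1.1.1.1.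
have [n2' k21 k22] := hn2.1.1.1.1.
split.
- move=> [g [[b1 hb1 e1] [b2 hb2 e2]]].
  have E : n1 \o alpha \o b1 = n2 \o alpha \o b2 by rewrite -e1 -e2.
  have H12 := HL hn1 hn2 hb1 hb2 E k21 k22.
  have H21 := HL hn2 hn1 hb2 hb1 (esym E) k11 k12.
  move=> g'; split.
  + move=> [h hh ->]; exists ((n2' \o n1) \o h); first exact: inHhat_comp.
    by apply: functional_extensionality => y /=; rewrite k22.
  + move=> [h hh ->]; exists ((n1' \o n2) \o h); first exact: inHhat_comp.
    by apply: functional_extensionality => y /=; rewrite k12.
- move=> H.
  have [h hh eh] : exists2 h, inHhat w e x h & n1 = n2 \o h.
    by apply/H; exists id; [exact: inHhat_id|].
  exists (n1 \o alpha); split.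
  + exists id; first exact: inHhat_id.1.1.
    by [].
  + exists (al' \o h \o alpha).
    * split.
      - apply: (inGhat_comp hv hw0 hw) => //; apply: (inGhat_comp hv hw0 hw).
        + exact: (inGhat_inv hv hw0 hw) halpha ca1 ca2.
        + exact: hh.1.1.1.
      - exists 0, 0 => m _ _ /=; rewrite halphax hh.2 -halphax ca1 addr0 //.
    * by apply: functional_extensionality => y /=; rewrite ca2 eh.
Qed.

Hypothesis hc : is_complete v.

Lemma biinf_comp (g : V -> V) : isAut w g -> is_biinf_path w (g \o x).
Proof.
move=> ag; split => n /=.
- have := @aut_adj _ _ hv w hw0 hw g (x n) (x (n + 1)) ag (hx.1 n). done.
- move=> eq; apply: (hx.2 n); exact: (bij_inj ag.1 eq).
Qed.

Lemma part1_c0 g Q a b d : inGhat w e g -> (forall j, rep (g (x j)) (dg w j *m Q)) ->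
  Q = mk2 a b 0 d *m P -> a * d != 0 -> fixes_end x g.
Proof.
move=> hg hQ eQ nad.
have na : a != 0 by move: nad; rewrite mulf_eq0 negb_or => /andP[].
have nd : d != 0 by move: nad; rewrite mulf_eq0 negb_or => /andP[].
exists (v a - v d), (`|v d| + `|v b|) => m h0 hN.
set s := v a - v d.
pose U := mk2 (w ^ m * a / (d * w ^ (m + s))) (w ^ m * b / d) 0 1.
have nm := expfz_neq0 m hw0; have nms := expfz_neq0 (m + s) hw0.
have eU : dg w m *m Q = d *: (U *m (dg w (m + s) *m P)).
  rewrite eQ mulmxA (mulmxA U) scalemxAl; congr (_ *m _).
  have e1 : w ^ (m + s) = w ^ m * w ^ s by rewrite (wXD hw0).
  have ns := expfz_neq0 s hw0.
  rewrite /U /dg !mk2_mul mk2_scale e1; congr mk2; fieldnz.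
have v00 : v (w ^ m * a / (d * w ^ (m + s))) = 0.
  rewrite (vdiv hv) ?mulf_neq0 // !(vM hv) // !(vX hv hw0 hw) /s; lia.
have hU : GL2o v U.
  apply: (gl2o_mk2 hv); try exact: gv0; try exact: (gv1 hv).
  - by right; rewrite v00.
  - case: (eqVneq b 0) => [->|nb]; first by rewrite mulr0 mul0r; exact: gv0.
    right; rewrite (vdiv hv) ?mulf_neq0 // (vM hv) // (vX hv hw0 hw); lia.
  - by rewrite mulr1 mulr0 subr0 !mulf_neq0 ?invr_neq0 ?mulf_neq0.
  - by rewrite mulr1 mulr0 subr0.
have := hQ m; rewrite eU => hr.
symmetry; exact: (vert_eqGL hv (hP (m + s)) hr nd hU).
Qed.

Lemma part1 g : inGhat w e g <->
     ((exists n b, [/\ inNhat w e x n, inBhat w e x b & g = n \o alpha \o b])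
      \/ inBhat w e x g).
Proof.
split; last first.
  case=> [[n [b [hn hb ->]]]|[]] //.
  apply: (inGhat_comp hv hw0 hw); last exact: hb.1.
  apply: (inGhat_comp hv hw0 hw) => //; exact: hn.1.1.
move=> hg; case: (classic (inBhat w e x g)) => hB; [by right | left].
have hnf : ~ fixes_end x g by move=> h; apply: hB.
have [al' ca1 ca2] := halpha.1.1.
have [Q [uQ hQ]] := apartment hv hw0 hw (biinf_comp hg.1) hc.
have {}hQ : forall j, rep (g (x j)) (dg w j *m Q) by [].
set R := Q *m invmx P.
have eQ : Q = R *m P by rewrite /R mulmxKV.
have uR : R \in unitmx by rewrite unitmx_mul uQ unitmx_inv.
move: eQ uR; rewrite [R]mk2E; set a := R 0 0; set b := R 0 1; set c := R 1 0; set d := R 1 1.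
clearbody a b c d => eQ uR; rewrite mk2_unit in uR.
case: (eqVneq c 0) => [c0|nc].
  exfalso; apply: hnf; apply: (part1_c0 hg hQ) (_ : Q = mk2 a b 0 d *m P) _.
  - by rewrite eQ c0.
  - by move: uR; rewrite c0 mulr0 subr0.
set t := d / c.
set Nm := invmx P *m mk2 1 t 0 1 *m P.
have uN : Nm \in unitmx.
  by rewrite !unitmx_mul unitmx_inv uP mk2_unit mulr1 mulr0 subr0 oner_eq0.
pose n := @act _ v Nm.
have rn : forall j, rep (n (x j)) (mk2 1 (t * w ^ j) 0 1 *m (dg w j *m P)).
  move=> j; have := acts_as_rep (acts_as_act (x j) uN) (hP j) uN.
  have -> : dg w j *m P *m Nm = mk2 1 (t * w ^ j) 0 1 *m (dg w j *m P).
    rewrite /Nm !mulmxA mulmxK //; congr (_ *m _).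
    have := dg_up hw0 t 0 j; rewrite expr0z mulr1 add0r => ->. done.
  done.
have nfix : forall j, `|v t| <= j -> n (x j) = x j.
  move=> j hj; symmetry; apply: (vert_eqGL hv (hP j) (c := 1) (U := mk2 1 (t * w ^ j) 0 1)).
  - by rewrite scale1r; exact: rn.
  - exact: oner_neq0.
  - apply: (GL2o_up hv); case: (eqVneq t 0) => [->|nt]; first by rewrite mul0r; exact: gv0.
    right; rewrite (vM hv nt (expfz_neq0 j hw0)) (vX hv hw0 hw); lia.
have hnN : inNhat w e x n.
  split; last by exists `|v t|; apply: nfix.
  split; first exact: inGhat_act.
  by exists 0, `|v t| => m _ hm; rewrite addr0 nfix.
pose n' := @act _ v (invmx Nm).
have cn1 : cancel n n' := act_cancel uN.
have cn2 : cancel n' n := act_cancel' uN.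
exists n, (al' \o n' \o g); split => //.
- split.
  + apply: (inGhat_comp hv hw0 hw) => //; apply: (inGhat_comp hv hw0 hw).
    * exact: (inGhat_inv hv hw0 hw) halpha ca1 ca2.
    * apply: inGhat_act; by rewrite unitmx_inv.
  + set dl := a * d - b * c.
    have ndl : dl != 0 by [].
    exists (v dl - (v c + v c)), (`|v c| + `|v a|) => m h0 hN.
    set j := m + (v dl - (v c + v c)).
    have key : n (x (- j)) = g (x m).
      pose U := mk2 (w ^ m * a / c) (- (w ^ m * dl / (c * c * w ^ j))) 1 0.
      have nm := expfz_neq0 m hw0; have nj := expfz_neq0 j hw0.
      have ej : w ^ (- j) = (w ^ j)^-1 by rewrite invr_expz.
      have eU : dg w m *m Q = (c * w ^ j) *: (U *m (mk2 1 (t * w ^ (- j)) 0 1 *m (dg w (- j) *m P))).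
        rewrite eQ !mulmxA scalemxAl; congr (_ *m _).
        rewrite /U /dg /t /dl ej !mk2_mul mk2_scale; congr mk2; fieldnz.
      have vU01 : v (- (w ^ m * dl / (c * c * w ^ j))) = 0.
        rewrite (vN hv) (vdiv hv) ?mulf_neq0 // !(vM hv) ?mulf_neq0 // !(vX hv hw0 hw) /j; lia.
      have nU01 : - (w ^ m * dl / (c * c * w ^ j)) != 0.
        by rewrite oppr_eq0 !mulf_neq0 ?invr_neq0 ?mulf_neq0.
      have hU : GL2o v U.
        apply: (gl2o_mk2 hv); try exact: gv0; try exact: (gv1 hv).
        - case: (eqVneq a 0) => [->|na]; first by rewrite mulr0 mul0r; exact: gv0.
          right; rewrite (vdiv hv) ?mulf_neq0 // (vM hv) // (vX hv hw0 hw); lia.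
        - by right; rewrite vU01.
        - by rewrite mulr0 mulr1 sub0r oppr_eq0.
        - by rewrite mulr0 mulr1 sub0r (vN hv).
      have := hQ m; rewrite eU => hr.
      exact: (vert_eqGL hv (rn (- j)) hr (mulf_neq0 nc (expfz_neq0 j hw0)) hU).
    by rewrite /= -key cn1 -halphax ca1.
- apply: functional_extensionality => y /=; by rewrite ca2 cn2.
Qed.

End Main.

Unset Implicit Arguments.

Theorem mainTheorem11 (F : fieldType) (v : F -> int)
  (hF : is_nonarch_local_field v)
  (varpi : F) (hvarpi0 : varpi != 0) (hvarpi : v varpi = 1)
  (e : nat) (he : (1 <= e)%N)
  (x : int -> Vertex v) (hx : is_biinf_path varpi x)
  (alpha : Vertex v -> Vertex v) (halpha : inGhat varpi e alpha)
  (halphax : forall n : int, alpha (x n) = x (- n)) :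
  (* hat G = hat N alpha hat B  disjoint-union  hat B *)
  (forall g : Vertex v -> Vertex v,
     inGhat varpi e g <->
     ((exists n, exists b, [/\ inNhat varpi e x n, inBhat varpi e x b &
                               g = n \o alpha \o b])
      \/ inBhat varpi e x g)) /\
  (forall g : Vertex v -> Vertex v,
     ~ ((exists n, exists b, [/\ inNhat varpi e x n, inBhat varpi e x b &
                                g = n \o alpha \o b])
        /\ inBhat varpi e x g)) /\
  (* n1 alpha hat B meets n2 alpha hat B  iff  n1 hat H = n2 hat H *)
  (forall n1 n2 : Vertex v -> Vertex v,
     inNhat varpi e x n1 -> inNhat varpi e x n2 ->
     ((exists g, (exists2 b, inBhat varpi e x b & g = n1 \o alpha \o b) /\
                 (exists2 b, inBhat varpi e x b & g = n2 \o alpha \o b))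
      <->
      (forall g, (exists2 h, inHhat varpi e x h & g = n1 \o h) <->
                 (exists2 h, inHhat varpi e x h & g = n2 \o h)))).
Proof.
have [hv hc _] := hF.
have [P [uP hP]] := apartment hv hvarpi0 hvarpi hx hc.
split; [|split].
- move=> g; exact: (part1 hv hvarpi0 hvarpi hx uP hP halpha halphax hc g).
- move=> g; exact: (part2 hv hvarpi0 hvarpi hx uP hP halphax).
- move=> n1 n2 h1 h2; exact: (part3 hv hvarpi0 hvarpi hx uP hP halpha halphax h1 h2).
Qed.
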